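(* Let $H$ be $d^4/dx^4$ in $L_2(\mathbb{R}_+)$ with boundary conditions $u''(0)=\alpha u(0)+\alpha_1u'(0)$, $u'''(0)=-\alpha_2u(0)-\bar\alpha u'(0)$ ($\alpha\in\mathbb{C}$, $\alpha_1,\alpha_2\in\mathbb{R}$). Then the total number of negative eigenvalues of $H$ (counted with multiplicity) coincides with the number of negative eigenvalues (counted with multiplicity) of the Hermitian matrix $A=\begin{pmatrix}\alpha_2&\bar\alpha\\ \alpha&\alpha_1\end{pmatrix}$ acting in $\mathbb{C}^2$.
   Context: $H$ acts as $u\mapsto u^{(4)}$ on $u\in\mathsf{H}^4(\mathbb{R}_+)$ satisfying the boundary conditions; it is self-adjoint, with quadratic form $\int_0^\infty|u''|^2dx+\alpha_2|u(0)|^2+2\operatorname{Re}(\alpha u(0)\overline{u'(0)})+\alpha_1|u'(0)|^2$ on $\mathsf{H}^2(\mathbb{R}_+)$. *)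

(* Defs.v *)
From Stdlib Require Import Reals List.
From Coquelicot Require Import Coquelicot.
Open Scope R_scope.

Definition lin_comb {X : Type} (cs : list C) (us : list (X -> C)) (x : X) : C :=
  fold_right (fun p acc => Cplus (Cmult (fst p) (snd p x)) acc) (RtoC 0)
             (combine cs us).

(** Linear independence of a finite family of functions, as elements of the
    space of functions on the domain D (functions are identified when they
    agree on D). *)
Definition lin_indep {X : Type} (D : X -> Prop) (us : list (X -> C)) : Prop :=
  forall cs : list C, List.length cs = List.length us ->
    (forall x, D x -> lin_comb cs us x = RtoC 0) ->
    List.Forall (fun c => c = RtoC 0) cs.

Definition subspace_dim {X : Type} (D : X -> Prop) (E : (X -> C) -> Prop)
  (m : nat) : Prop :=
  (exists us, List.length us = m /\ List.Forall E us /\ lin_indep D us) /\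
  (forall us, List.Forall E us -> lin_indep D us -> (List.length us <= m)%nat).

(** Given the eigen-relation [Eig lam v] ("v is in the domain and Tv = lam v")
    of an operator T acting on functions on D, [neg_eig_count D Eig n] says:
    T has finitely many negative eigenvalues and the sum of their
    multiplicities (dimensions of the eigenspaces) equals n. *)
Definition neg_eig_count {X : Type} (D : X -> Prop)
  (Eig : R -> (X -> C) -> Prop) (n : nat) : Prop :=
  exists (l : list R) (ms : list nat),
    NoDup l /\ List.length ms = List.length l /\
    (forall lam, (lam < 0 /\ exists v, Eig lam v /\ exists x, D x /\ v x <> RtoC 0)
                 <-> In lam l) /\
    (forall i, (i < List.length l)%nat -> subspace_dim D (Eig (nth i l 0)) (nth i ms 0%nat)) /\
    fold_right Nat.add 0%nat ms = n.

Definition halfline (x : R) : Prop := 0 <= x.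

Definition sq_int_halfline (f : R -> C) : Prop :=
  ex_RInt_gen (fun x => (Cmod (f x)) ^ 2) (at_point 0) (Rbar_locally p_infty).

(** u is an eigenfunction of H (d^4/dx^4 on L_2(R_+) with the boundary
    conditions u''(0) = al u(0) + al1 u'(0), u'''(0) = -al2 u(0) - conj(al) u'(0))
    with eigenvalue lam: u is in H^4(R_+) (here: u classically C^4 on (0,oo),
    u,...,u''' continuous up to 0, u,...,u'''' square integrable), satisfies the
    boundary conditions, and u'''' = lam u. *)
Definition H_eig (al : C) (al1 al2 : R) (lam : R) (u : R -> C) : Prop :=
  exists u1 u2 u3 u4 : R -> C,
    (forall x, 0 < x ->
       is_derive u x (u1 x) /\ is_derive u1 x (u2 x) /\
       is_derive u2 x (u3 x) /\ is_derive u3 x (u4 x)) /\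
    filterlim u (at_right 0) (locally (u 0)) /\
    filterlim u1 (at_right 0) (locally (u1 0)) /\
    filterlim u2 (at_right 0) (locally (u2 0)) /\
    filterlim u3 (at_right 0) (locally (u3 0)) /\
    sq_int_halfline u /\ sq_int_halfline u1 /\ sq_int_halfline u2 /\
    sq_int_halfline u3 /\ sq_int_halfline u4 /\
    u2 0 = Cplus (Cmult al (u 0)) (Cmult (RtoC al1) (u1 0)) /\
    u3 0 = Copp (Cplus (Cmult (RtoC al2) (u 0)) (Cmult (Cconj al) (u1 0))) /\
    (forall x, 0 < x -> u4 x = Cmult (RtoC lam) (u x)).

(** Vectors of C^2 as functions bool -> C (true = first coordinate).
    Eigen-relation of the Hermitian matrix A = [[al2, conj al],[al, al1]]. *)
Definition A_eig (al : C) (al1 al2 : R) (lam : R) (v : bool -> C) : Prop :=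
  Cplus (Cmult (RtoC al2) (v true)) (Cmult (Cconj al) (v false))
    = Cmult (RtoC lam) (v true) /\
  Cplus (Cmult al (v true)) (Cmult (RtoC al1) (v false))
    = Cmult (RtoC lam) (v false).

Definition allbool (b : bool) : Prop := True.

(* Main.v *)
Require Import Defs.
From Stdlib Require Import Reals List.
From Coquelicot Require Import Coquelicot.
From Stdlib Require Import Permutation Lra Lia Psatz Classical ClassicalEpsilon FunctionalExtensionality.
Open Scope R_scope.

Lemma is_derive_pairR (f g : R -> R) x a b :
  is_derive f x a -> is_derive g x b ->
  is_derive (fun y => ((f y, g y) : C)) x ((a, b) : C).
Proof.
  intros Hf Hg.
  unfold is_derive.
  apply (filterdiff_comp_2 f g (fun a b => (a,b) : R * R)
    (fun y => scal y a) (fun y => scal y b) (fun a b => (a,b))); auto.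
  apply filterdiff_linear. split.
  - intros; reflexivity.
  - intros; reflexivity.
  - exists 1. split. lra. intros [u v]. simpl. rewrite Rmult_1_l. apply Rle_refl.
Qed.

Lemma is_derive_fst (f : R -> C) x l :
  is_derive f x l -> is_derive (fun y => fst (f y)) x (fst l).
Proof.
  intros H. unfold is_derive in *.
  apply (filterdiff_comp f (fun z : prod_NormedModule R_AbsRing R_NormedModule R_NormedModule => fst z) _ (fun z => fst z) H).
  apply filterdiff_linear. split.
  - intros; reflexivity.
  - intros; reflexivity.
  - exists 1. split. lra. intros [u v]. simpl.
    unfold prod_norm. simpl. rewrite Rmult_1_l.
    destruct (sqrt_plus_sqr (norm u) (norm v)) as [H1 _].
    eapply Rle_trans; [|apply H1].
    eapply Rle_trans; [|apply Rmax_l]. unfold norm; simpl. unfold abs; simpl. rewrite Rabs_Rabsolu. apply Rle_refl.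
Qed.

Lemma is_derive_snd (f : R -> C) x l :
  is_derive f x l -> is_derive (fun y => snd (f y)) x (snd l).
Proof.
  intros H. unfold is_derive in *.
  apply (filterdiff_comp f (fun z : prod_NormedModule R_AbsRing R_NormedModule R_NormedModule => snd z) _ (fun z => snd z) H).
  apply filterdiff_linear. split.
  - intros; reflexivity.
  - intros; reflexivity.
  - exists 1. split. lra. intros [u v]. simpl.
    unfold prod_norm. simpl. rewrite Rmult_1_l.
    destruct (sqrt_plus_sqr (norm u) (norm v)) as [H1 _].
    eapply Rle_trans; [|apply H1].
    eapply Rle_trans; [|apply Rmax_r]. unfold norm; simpl. unfold abs; simpl. rewrite Rabs_Rabsolu. apply Rle_refl.
Qed.

Lemma is_derive_C (f : R -> C) x l :
  is_derive (fun y => fst (f y)) x (fst l) ->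
  is_derive (fun y => snd (f y)) x (snd l) -> is_derive f x l.
Proof.
  intros H1 H2. destruct l as [a b].
  eapply is_derive_ext; [|apply (is_derive_pairR _ _ x a b H1 H2)].
  intros y. simpl. destruct (f y); reflexivity.
Qed.

Lemma isd_conv (f g : R -> R) x l l' : (forall y, f y = g y) -> l = l' -> is_derive f x l -> is_derive g x l'.
Proof. intros H1 H2 H. subst. eapply is_derive_ext; eauto. Qed.

Lemma is_derive_Rmult' (f g : R -> R) x a b :
  is_derive f x a -> is_derive g x b ->
  is_derive (fun y => f y * g y) x (a * g x + f x * b).
Proof. intros. apply (is_derive_mult f g); auto. intros; apply Rmult_comm. Qed.

Lemma is_derive_Rminus' (f g : R -> R) x a b :
  is_derive f x a -> is_derive g x b ->
  is_derive (fun y => f y - g y) x (a - b).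
Proof. intros. apply (is_derive_minus f g); auto. Qed.

Lemma is_derive_Rplus' (f g : R -> R) x a b :
  is_derive f x a -> is_derive g x b ->
  is_derive (fun y => f y + g y) x (a + b).
Proof. intros. apply (is_derive_plus f g); auto. Qed.

Lemma is_derive_Cmult (f g : R -> C) x a b :
  is_derive f x a -> is_derive g x b ->
  is_derive (fun y => Cmult (f y) (g y)) x (Cplus (Cmult a (g x)) (Cmult (f x) b)).
Proof.
  intros Hf Hg.
  pose proof (is_derive_fst _ _ _ Hf) as F1.
  pose proof (is_derive_snd _ _ _ Hf) as F2.
  pose proof (is_derive_fst _ _ _ Hg) as G1.
  pose proof (is_derive_snd _ _ _ Hg) as G2.
  apply is_derive_C; simpl.
  - eapply isd_conv; [| |apply is_derive_Rminus'; apply is_derive_Rmult'; [apply F1|apply G1|apply F2|apply G2]].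
    + intros; reflexivity.
    + simpl; ring.
  - eapply isd_conv; [| |apply is_derive_Rplus'; apply is_derive_Rmult'; [apply F1|apply G2|apply F2|apply G1]].
    + intros; reflexivity.
    + simpl; ring.
Qed.

Lemma is_derive_Cplus (f g : R -> C) x a b :
  is_derive f x a -> is_derive g x b ->
  is_derive (fun y => Cplus (f y) (g y)) x (Cplus a b).
Proof.
  intros Hf Hg.
  pose proof (is_derive_fst _ _ _ Hf) as F1.
  pose proof (is_derive_snd _ _ _ Hf) as F2.
  pose proof (is_derive_fst _ _ _ Hg) as G1.
  pose proof (is_derive_snd _ _ _ Hg) as G2.
  apply is_derive_C; simpl.
  - apply is_derive_Rplus'; auto.
  - apply is_derive_Rplus'; auto.
Qed.

Lemma is_derive_Cconst (c : C) x : is_derive (fun _ : R => c) x (RtoC 0).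
Proof.
  apply is_derive_C; simpl; [exact (@is_derive_const R_AbsRing R_NormedModule (fst c) x) | exact (@is_derive_const R_AbsRing R_NormedModule (snd c) x)].
Qed.

Lemma is_derive_Cconv (f g : R -> C) x l l' : (forall y, f y = g y) -> l = l' -> is_derive f x l -> is_derive g x l'.
Proof. intros H1 H2 H. subst. eapply is_derive_ext; eauto. Qed.

Lemma is_derive_Cscal (c : C) (f : R -> C) x a :
  is_derive f x a -> is_derive (fun y => Cmult c (f y)) x (Cmult c a).
Proof.
  intros Hf. eapply is_derive_Cconv; [| |apply (is_derive_Cmult (fun _ => c) f x (RtoC 0) a); auto using is_derive_Cconst].
  - reflexivity.
  - apply injective_projections; simpl; ring.
Qed.

Definition E (s : C) (x : R) : C := (exp (fst s * x) * cos (snd s * x), exp (fst s * x) * sin (snd s * x)).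

Lemma is_derive_E s x : is_derive (E s) x (Cmult s (E s x)).
Proof.
  destruct s as [a b]. unfold E. apply is_derive_C; simpl.
  - auto_derive. auto. ring.
  - auto_derive. auto. ring.
Qed.

Lemma E_inv w x : Cmult (E w x) (E (Copp w) x) = RtoC 1.
Proof.
  destruct w as [a b]; unfold E; simpl.
  replace (- a * x) with (- (a * x)) by ring.
  replace (- b * x) with (- (b * x)) by ring.
  rewrite cos_neg, sin_neg.
  assert (He : exp (a * x) * exp (- (a*x)) = 1).
  { rewrite <- exp_plus. replace (a * x + - (a * x)) with 0 by ring. apply exp_0. }
  pose proof (sin2_cos2 (b * x)) as Hs. unfold Rsqr in Hs.
  apply injective_projections; simpl.
  - transitivity (exp (a * x) * exp (- (a*x)) * (sin (b * x) * sin (b * x) + cos (b * x) * cos (b * x))).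
    ring. rewrite He, Hs. ring.
  - ring.
Qed.

Definition Lw (w : C) (u u1 u2 u3 : R -> C) (x : R) : C :=
  Cplus (u3 x) (Cplus (Cmult w (u2 x)) (Cplus (Cmult (Cmult w w) (u1 x)) (Cmult (Cmult w (Cmult w w)) (u x)))).

Lemma ode_mode (u u1 u2 u3 u4 : R -> C) (lam : C) (w : C) :
  (forall x, 0 < x ->
       is_derive u x (u1 x) /\ is_derive u1 x (u2 x) /\
       is_derive u2 x (u3 x) /\ is_derive u3 x (u4 x)) ->
  (forall x, 0 < x -> u4 x = Cmult lam (u x)) ->
  Cmult w (Cmult w (Cmult w w)) = lam ->
  exists c, forall x, 0 < x -> Lw w u u1 u2 u3 x = Cmult c (E w x).
Proof.
  intros Hd H4 Hw.
  set (G := fun x => Cmult (E (Copp w) x) (Lw w u u1 u2 u3 x)).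
  assert (HG : forall x, 0 < x -> is_derive G x (RtoC 0)).
  { intros x Hx. destruct (Hd x Hx) as (D0 & D1 & D2 & D3).
    unfold G, Lw.
    eapply is_derive_Cconv; [intros; reflexivity| |
      apply is_derive_Cmult; [apply is_derive_E|
       apply is_derive_Cplus; [apply D3| apply is_derive_Cplus;
         [apply is_derive_Cscal; apply D2 | apply is_derive_Cplus;
           [apply is_derive_Cscal; apply D1| apply is_derive_Cscal; apply D0]]]]].
    rewrite (H4 x Hx), <- Hw.
    change (Cplus
      (Cmult (Cmult (Copp w) (E (Copp w) x))
         (Cplus (u3 x) (Cplus (Cmult w (u2 x)) (Cplus (Cmult (Cmult w w) (u1 x)) (Cmult (Cmult w (Cmult w w)) (u x))))))
      (Cmult (E (Copp w) x)
         (Cplus (Cmult (Cmult w (Cmult w (Cmult w w))) (u x))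
            (Cplus (Cmult w (u3 x)) (Cplus (Cmult (Cmult w w) (u2 x)) (Cmult (Cmult w (Cmult w w)) (u1 x))))))
      = RtoC 0).
    ring. }
  exists (G 1). intros x Hx.
  assert (HGx : G x = G 1).
  { destruct (Rtotal_order x 1) as [Hl|[He|Hg]].
    - apply eq_is_derive; [|lra]. intros s Hs. apply HG. lra.
    - subst; reflexivity.
    - symmetry. apply eq_is_derive; [|lra]. intros s Hs. apply HG. lra. }
  rewrite <- HGx. unfold G.
  transitivity (Cmult (Cmult (E w x) (E (Copp w) x)) (Lw w u u1 u2 u3 x)).
  - rewrite E_inv. ring.
  - ring.
Qed.

Lemma sqint_bound (f : R -> C) : sq_int_halfline f ->
  exists M b0, forall b, b0 < b ->
    ex_RInt (fun x => Cmod (f x) ^ 2) 0 b /\ RInt (fun x => Cmod (f x) ^ 2) 0 b <= M.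
Proof.
  intros [l Hl].
  assert (H1 : 0 < 1) by lra.
  specialize (Hl (ball l (mkposreal 1 H1)) (locally_ball l (mkposreal 1 H1))).
  destruct Hl as [Q R' HQ HR HP].
  destruct HR as [M HM].
  exists (l + 1), M. intros b Hb.
  destruct (HP 0 b HQ (HM b Hb)) as [y [Hy Hball]].
  split.
  - exists y; exact Hy.
  - change (is_RInt (fun x => Cmod (f x) ^ 2) 0 b y) in Hy. rewrite (is_RInt_unique _ _ _ _ Hy).
    change (Rabs (y - l) < 1) in Hball. apply Rabs_lt_between in Hball. lra.
Qed.

Lemma Cmod_E w x : Cmod (E w x) = exp (fst w * x).
Proof.
  unfold Cmod, E; cbn [fst snd].
  replace ((exp (fst w * x) * cos (snd w * x)) ^ 2 + (exp (fst w * x) * sin (snd w * x)) ^ 2)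
    with (exp (fst w * x) ^ 2 * (sin (snd w * x) ^ 2 + cos (snd w * x) ^ 2)) by ring.
  rewrite <- !Rsqr_pow2, sin2_cos2, Rmult_1_r. apply sqrt_Rsqr. left; apply exp_pos.
Qed.

Lemma sq_ineq4 a b c d : (a + b + c + d) ^ 2 <= 4 * (a ^ 2 + b ^ 2 + c ^ 2 + d ^ 2).
Proof. pose proof (pow2_ge_0 (a-b)). pose proof (pow2_ge_0 (a-c)). pose proof (pow2_ge_0 (a-d)). pose proof (pow2_ge_0 (b-c)). pose proof (pow2_ge_0 (b-d)). pose proof (pow2_ge_0 (c-d)). nra. Qed.

Lemma growing_zero (u u1 u2 u3 : R -> C) (w c : C) :
  0 < fst w ->
  sq_int_halfline u -> sq_int_halfline u1 -> sq_int_halfline u2 -> sq_int_halfline u3 ->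
  (forall x, 0 < x -> Lw w u u1 u2 u3 x = Cmult c (E w x)) -> c = RtoC 0.
Proof.
  intros Hw S0 S1 S2 S3 HL.
  destruct (sqint_bound _ S0) as (M0 & b0 & B0).
  destruct (sqint_bound _ S1) as (M1 & b1 & B1).
  destruct (sqint_bound _ S2) as (M2 & b2 & B2).
  destruct (sqint_bound _ S3) as (M3 & b3 & B3).
  set (m := Cmod w).
  set (F := fun x => 4 * (Cmod (u3 x) ^ 2 + m ^ 2 * Cmod (u2 x) ^ 2 + m ^ 4 * Cmod (u1 x) ^ 2 + m ^ 6 * Cmod (u x) ^ 2)).
  assert (Hpt : forall x, 0 < x -> Cmod c ^ 2 <= F x).
  { intros x Hx.
    assert (Hc : Cmod c <= Cmod (Lw w u u1 u2 u3 x)).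
    { rewrite HL by auto. rewrite Cmod_mult, Cmod_E.
      assert (1 <= exp (fst w * x)).
      { rewrite <- exp_0. destruct (Req_dec (fst w * x) 0) as [e|ne]. rewrite e; lra.
        left. apply exp_increasing. nra. }
      pose proof (Cmod_ge_0 c). nra. }
    assert (Htr : Cmod (Lw w u u1 u2 u3 x) <= Cmod (u3 x) + m * Cmod (u2 x) + m ^ 2 * Cmod (u1 x) + m ^ 3 * Cmod (u x)).
    { unfold Lw.
      eapply Rle_trans; [apply Cmod_triangle|].
      eapply Rle_trans; [apply Rplus_le_compat_l, Cmod_triangle|].
      eapply Rle_trans; [apply Rplus_le_compat_l, Rplus_le_compat_l, Cmod_triangle|].
      rewrite !Cmod_mult. fold m. right. ring. }
    unfold F.
    eapply Rle_trans; [|apply Rmult_le_compat_l; [lra|]].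
    2:{ apply Req_le. reflexivity. }
    pose proof (Cmod_ge_0 c). pose proof (Cmod_ge_0 (Lw w u u1 u2 u3 x)).
    eapply Rle_trans with (Cmod (Lw w u u1 u2 u3 x) ^ 2). nra.
    eapply Rle_trans with ((Cmod (u3 x) + m * Cmod (u2 x) + m ^ 2 * Cmod (u1 x) + m ^ 3 * Cmod (u x)) ^ 2). nra.
    eapply Rle_trans; [apply sq_ineq4|]. right. ring. }
  set (K := 4 * (M3 + m ^ 2 * M2 + m ^ 4 * M1 + m ^ 6 * M0)).
  assert (Hb : forall b, Rmax (Rmax b0 b1) (Rmax (Rmax b2 b3) 0) < b -> Cmod c ^ 2 * b <= K).
  { intros b Hb.
    assert (b0 < b /\ b1 < b /\ b2 < b /\ b3 < b /\ 0 < b) as (h0 & h1 & h2 & h3 & h4).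
    { revert Hb. unfold Rmax. repeat destruct Rle_dec; intros; lra. }
    destruct (B0 b h0) as [E0 R0]. destruct (B1 b h1) as [E1 R1].
    destruct (B2 b h2) as [E2 R2]. destruct (B3 b h3) as [E3 R3].
    apply (@RInt_correct R_CompleteNormedModule) in E0, E1, E2, E3.
    assert (HF : is_RInt F 0 b (4 * (RInt (fun x => Cmod (u3 x) ^ 2) 0 b + m ^ 2 * RInt (fun x => Cmod (u2 x) ^ 2) 0 b
       + m ^ 4 * RInt (fun x => Cmod (u1 x) ^ 2) 0 b + m ^ 6 * RInt (fun x => Cmod (u x) ^ 2) 0 b))).
    { pose proof (is_RInt_scal _ _ _ (m^2) _ E2) as T2.
      pose proof (is_RInt_scal _ _ _ (m^4) _ E1) as T1.
      pose proof (is_RInt_scal _ _ _ (m^6) _ E0) as T0.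
      pose proof (is_RInt_scal _ _ _ 4 _ (is_RInt_plus _ _ _ _ _ _ (is_RInt_plus _ _ _ _ _ _ (is_RInt_plus _ _ _ _ _ _ E3 T2) T1) T0)) as T.
      exact T. }
    pose proof (is_RInt_const 0 b (Cmod c ^ 2)) as HC.
    pose proof (is_RInt_le _ _ _ _ _ _ (Rlt_le _ _ h4) HC HF (fun x Hx => Hpt x (proj1 Hx))) as Hle.
    change (scal (b - 0) (Cmod c ^ 2)) with ((b - 0) * Cmod c ^ 2) in Hle.
    unfold K. assert (0 <= m) by apply Cmod_ge_0.
    assert (0 <= m ^ 2) by (apply pow_le; auto).
    assert (0 <= m ^ 4) by (apply pow_le; auto).
    assert (0 <= m ^ 6) by (apply pow_le; auto).
    nra. }
  assert (HB0 : 0 <= Rmax (Rmax b0 b1) (Rmax (Rmax b2 b3) 0)) by (eapply Rle_trans; [|apply Rmax_r]; apply Rmax_r).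
  remember (Rmax (Rmax b0 b1) (Rmax (Rmax b2 b3) 0)) as B eqn:HBdef.
  clearbody K.
  destruct (Req_dec (Cmod c) 0) as [Hc|Hc].
  - apply Cmod_eq_0 in Hc. exact Hc.
  - exfalso. pose proof (Cmod_ge_0 c).
    assert (Hc2 : 0 < Cmod c ^ 2) by (apply pow_lt; lra).
    assert (HKpos : 0 <= K) by (pose proof (Hb (B + 1) ltac:(lra)); assert (0 < Cmod c ^ 2 * (B+1)) by (apply Rmult_lt_0_compat; lra); lra).
    set (b := B + K / Cmod c ^ 2 + 1).
    assert (HK2 : 0 <= K / Cmod c ^ 2) by (apply Rdiv_le_0_compat; lra).
    pose proof (Hb b ltac:(unfold b; lra)) as Hbb.
    unfold b in Hbb.
    assert (Cmod c ^ 2 * (K / Cmod c ^ 2) = K) by (field; lra).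
    nra.
Qed.

Definition Vs (w d0 d1 d2 d3 : C) : C :=
  Cplus d3 (Cplus (Cmult w d2) (Cplus (Cmult (Cmult w w) d1) (Cmult (Cmult w (Cmult w w)) d0))).

Lemma vand0 (p q d0 d1 d2 d3 : C) :
  p <> RtoC 0 -> q <> RtoC 0 -> Cminus (Cmult p p) (Cmult q q) <> RtoC 0 ->
  Vs p d0 d1 d2 d3 = RtoC 0 -> Vs (Copp p) d0 d1 d2 d3 = RtoC 0 ->
  Vs q d0 d1 d2 d3 = RtoC 0 -> Vs (Copp q) d0 d1 d2 d3 = RtoC 0 ->
  d0 = RtoC 0 /\ d1 = RtoC 0 /\ d2 = RtoC 0 /\ d3 = RtoC 0.
Proof.
  unfold Vs. intros Hp Hq Hpq E1 E2 E3 E4.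
  assert (A1 : Cplus d3 (Cmult (Cmult p p) d1) = RtoC 0).
  { transitivity (Cmult (RtoC (/2)) (Cplus (Cplus d3 (Cplus (Cmult p d2) (Cplus (Cmult (Cmult p p) d1) (Cmult (Cmult p (Cmult p p)) d0))))
        (Cplus d3 (Cplus (Cmult (Copp p) d2) (Cplus (Cmult (Cmult (Copp p) (Copp p)) d1) (Cmult (Cmult (Copp p) (Cmult (Copp p) (Copp p))) d0)))))).
    - apply injective_projections; simpl; field.
    - rewrite E1, E2. apply injective_projections; simpl; ring. }
  assert (A2 : Cplus d3 (Cmult (Cmult q q) d1) = RtoC 0).
  { transitivity (Cmult (RtoC (/2)) (Cplus (Cplus d3 (Cplus (Cmult q d2) (Cplus (Cmult (Cmult q q) d1) (Cmult (Cmult q (Cmult q q)) d0))))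
        (Cplus d3 (Cplus (Cmult (Copp q) d2) (Cplus (Cmult (Cmult (Copp q) (Copp q)) d1) (Cmult (Cmult (Copp q) (Cmult (Copp q) (Copp q))) d0)))))).
    - apply injective_projections; simpl; field.
    - rewrite E3, E4. apply injective_projections; simpl; ring. }
  assert (B1 : Cmult p (Cplus d2 (Cmult (Cmult p p) d0)) = RtoC 0).
  { transitivity (Cmult (RtoC (/2)) (Cminus (Cplus d3 (Cplus (Cmult p d2) (Cplus (Cmult (Cmult p p) d1) (Cmult (Cmult p (Cmult p p)) d0))))
        (Cplus d3 (Cplus (Cmult (Copp p) d2) (Cplus (Cmult (Cmult (Copp p) (Copp p)) d1) (Cmult (Cmult (Copp p) (Cmult (Copp p) (Copp p))) d0)))))).
    - apply injective_projections; simpl; field.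
    - rewrite E1, E2. apply injective_projections; simpl; ring. }
  assert (B2 : Cmult q (Cplus d2 (Cmult (Cmult q q) d0)) = RtoC 0).
  { transitivity (Cmult (RtoC (/2)) (Cminus (Cplus d3 (Cplus (Cmult q d2) (Cplus (Cmult (Cmult q q) d1) (Cmult (Cmult q (Cmult q q)) d0))))
        (Cplus d3 (Cplus (Cmult (Copp q) d2) (Cplus (Cmult (Cmult (Copp q) (Copp q)) d1) (Cmult (Cmult (Copp q) (Cmult (Copp q) (Copp q))) d0)))))).
    - apply injective_projections; simpl; field.
    - rewrite E3, E4. apply injective_projections; simpl; ring. }
  assert (B1' : Cplus d2 (Cmult (Cmult p p) d0) = RtoC 0).
  { transitivity (Cmult (Cinv p) (Cmult p (Cplus d2 (Cmult (Cmult p p) d0)))). field. auto.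
    rewrite B1. ring. }
  assert (B2' : Cplus d2 (Cmult (Cmult q q) d0) = RtoC 0).
  { transitivity (Cmult (Cinv q) (Cmult q (Cplus d2 (Cmult (Cmult q q) d0)))). field. auto.
    rewrite B2. ring. }
  assert (D1 : d1 = RtoC 0).
  { transitivity (Cmult (Cinv (Cminus (Cmult p p) (Cmult q q))) (Cminus (Cplus d3 (Cmult (Cmult p p) d1)) (Cplus d3 (Cmult (Cmult q q) d1)))).
    field. auto. rewrite A1, A2. ring. }
  assert (D0 : d0 = RtoC 0).
  { transitivity (Cmult (Cinv (Cminus (Cmult p p) (Cmult q q))) (Cminus (Cplus d2 (Cmult (Cmult p p) d0)) (Cplus d2 (Cmult (Cmult q q) d0)))).
    field. auto. rewrite B1', B2'. ring. }
  subst d0 d1.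
  split; [reflexivity|split; [reflexivity|split]].
  - transitivity (Cplus d2 (Cmult (Cmult p p) (RtoC 0))). ring. exact B1'.
  - transitivity (Cplus d3 (Cmult (Cmult p p) (RtoC 0))). ring. exact A1.
Qed.

Lemma exp_decay_lim (t K : R) : 0 < t -> forall (G : R -> R),
  (forall x, 0 <= x -> Rabs (G x) <= K * exp (- t * x)) ->
  filterlim G (Rbar_locally p_infty) (locally 0).
Proof.
  intros Ht G HG.
  apply filterlim_locally. intros eps.
  set (K' := Rabs K + 1).
  assert (HK' : 0 < K') by (unfold K'; pose proof (Rabs_pos K); lra).
  simpl. exists (Rmax 0 (ln (K' / eps) / t)).
  intros x Hx.
  pose proof (Rmax_l 0 (ln (K' / eps) / t)). pose proof (Rmax_r 0 (ln (K' / eps) / t)).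
  assert (Hx0 : 0 <= x) by lra.
  assert (Hx1 : ln (K' / eps) / t < x) by lra.
  change (Rabs (G x - 0) < eps). rewrite Rminus_0_r.
  eapply Rle_lt_trans; [apply HG; auto|].
  assert (Hlt : ln (K' / eps) < t * x).
  { apply (Rmult_lt_compat_l t) in Hx1; auto. unfold Rdiv in Hx1. field_simplify in Hx1; lra. }
  assert (He : K' / eps < exp (t * x)).
  { rewrite <- (exp_ln (K' / eps)). apply exp_increasing; auto.
    apply Rdiv_lt_0_compat; auto. apply cond_pos. }
  assert (Hexp : exp (- t * x) = / exp (t * x)).
  { replace (- t * x) with (- (t * x)) by ring. apply exp_Ropp. }
  rewrite Hexp.
  pose proof (exp_pos (t * x)). pose proof (cond_pos eps).
  apply (Rmult_lt_reg_r (exp (t * x))); auto.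
  rewrite Rmult_assoc, Rinv_l by lra.
  assert (K <= Rabs K) by apply Rle_abs.
  apply (Rmult_lt_compat_r eps) in He; auto.
  unfold Rdiv in He. rewrite Rmult_assoc, Rinv_l in He by lra.
  unfold K' in He. nra.
Qed.

Definition hfun (t P0 P1 P2 : R) (x : R) : R :=
  exp (- (2 * t) * x) * (P0 + P1 * cos (2 * t * x) + P2 * sin (2 * t * x)).

Definition Gfun (t P0 P1 P2 : R) (x : R) : R :=
  exp (- (2 * t) * x) * (- P0 / (2 * t) + (- (P1 + P2) / (4 * t)) * cos (2 * t * x) + ((P1 - P2) / (4 * t)) * sin (2 * t * x)).

Lemma Gfun_derive t P0 P1 P2 x : 0 < t -> is_derive (Gfun t P0 P1 P2) x (hfun t P0 P1 P2 x).
Proof.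
  intros Ht. unfold Gfun, hfun. auto_derive. auto. field. lra.
Qed.

Lemma hfun_int t P0 P1 P2 : 0 < t ->
  ex_RInt_gen (hfun t P0 P1 P2) (at_point 0) (Rbar_locally p_infty).
Proof.
  intros Ht.
  assert (HD : forall x, Derive (Gfun t P0 P1 P2) x = hfun t P0 P1 P2 x).
  { intros x. apply is_derive_unique. apply Gfun_derive; auto. }
  apply (@ex_RInt_gen_ext_eq R_NormedModule (at_point 0) (Rbar_locally p_infty) _ _ (Derive (Gfun t P0 P1 P2)) _ HD).
  exists (0 - Gfun t P0 P1 P2 0).
  apply is_RInt_gen_Derive.
  - apply Filter_prod with (fun x => True) (fun x => True).
    + exact I.
    + simpl; exists 0; auto.
    + intros; eexists; apply Gfun_derive; auto.
  - apply Filter_prod with (fun x => True) (fun x => True).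
    + exact I.
    + simpl; exists 0; auto.
    + intros. apply (continuous_ext (hfun t P0 P1 P2)). intros; rewrite HD; auto.
    apply (@ex_derive_continuous R_AbsRing R_NormedModule). unfold hfun. auto_derive. auto.
  - intros P HP. unfold filtermap, at_point. apply locally_singleton with (P := P); exact HP.
  - apply (exp_decay_lim (2 * t) (Rabs (- P0 / (2 * t)) + Rabs (- (P1 + P2) / (4 * t)) + Rabs ((P1 - P2) / (4 * t)))).
    lra. intros x Hx. unfold Gfun.
    rewrite Rabs_mult, (Rabs_pos_eq (exp _)) by (left; apply exp_pos).
    replace (- (2 * t) * x) with (- (2*t) * x) by ring.
    rewrite Rmult_comm. apply Rmult_le_compat_r. left; apply exp_pos.
    eapply Rle_trans; [apply Rabs_triang|].
    eapply Rle_trans; [apply Rplus_le_compat_r, Rabs_triang|].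
    rewrite !Rabs_mult.
    pose proof (COS_bound (2 * t * x)). pose proof (SIN_bound (2 * t * x)).
    assert (Rabs (cos (2 * t * x)) <= 1) by (apply Rabs_le; lra).
    assert (Rabs (sin (2 * t * x)) <= 1) by (apply Rabs_le; lra).
    pose proof (Rabs_pos (- (P1 + P2) / (4 * t))). pose proof (Rabs_pos ((P1 - P2) / (4 * t))).
    nra.
Qed.

Definition pp (t : R) : C := (- t, t).
Definition qq (t : R) : C := (- t, - t).

Lemma sqint_ab t a b : 0 < t ->
  sq_int_halfline (fun x => Cplus (Cmult a (E (pp t) x)) (Cmult b (E (qq t) x))).
Proof.
  intros Ht. unfold sq_int_halfline.
  destruct a as [a1 a2], b as [b1 b2].
  set (A := a1 + b1). set (B := b2 - a2). set (C0 := a1 - b1). set (D := a2 + b2).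
  apply (@ex_RInt_gen_ext_eq R_NormedModule (at_point 0) (Rbar_locally p_infty) _ _
    (hfun t ((A^2+B^2+C0^2+D^2)/2) ((A^2+D^2-B^2-C0^2)/2) (A*B+C0*D))).
  2: apply hfun_int; auto.
  intros x. unfold hfun, Cmod, E, pp, qq. cbn [fst snd Cplus Cmult].
  rewrite pow2_sqrt by (apply Rplus_le_le_0_compat; apply pow2_ge_0).
  replace (- t * x) with (- (t * x)) by ring.
  rewrite cos_neg, sin_neg.
  replace (- (2 * t) * x) with (- (t * x) + - (t * x)) by ring.
  rewrite exp_plus.
  replace (2 * t * x) with (2 * (t * x)) by ring.
  rewrite cos_2a, sin_2a.
  pose proof (sin2_cos2 (t * x)) as Hs. unfold Rsqr in Hs.
  set (e := exp (- (t * x))) in *. set (c := cos (t * x)) in *. set (s := sin (t * x)) in *.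
  clearbody e c s. apply Rminus_diag_uniq.
  transitivity (e * e * ((A^2+B^2+C0^2+D^2)/2) * (1 - (s * s + c * c))).
  - unfold A, B, C0, D. field.
  - rewrite Hs. ring.
Qed.

Lemma cont_at_right (f : R -> C) x :
  filterlim f (locally x) (locally (f x)) -> filterlim f (at_right x) (locally (f x)).
Proof.
  intros H P HP. specialize (H P HP).
  unfold filtermap, at_right, within in *.
  apply (filter_imp (fun y => P (f y))); auto.
Qed.

Definition fab (t : R) (a b : C) (x : R) : C :=
  Cplus (Cmult a (E (pp t) x)) (Cmult b (E (qq t) x)).

Lemma fab_derive t a b x :
  is_derive (fab t a b) x (fab t (Cmult a (pp t)) (Cmult b (qq t)) x).
Proof.
  unfold fab.
  eapply is_derive_Cconv; [intros; reflexivity| |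
    apply is_derive_Cplus; apply is_derive_Cscal; apply is_derive_E].
  change (@eq C (Cplus (Cmult a (Cmult (pp t) (E (pp t) x))) (Cmult b (Cmult (qq t) (E (qq t) x))))
     (Cplus (Cmult (Cmult a (pp t)) (E (pp t) x)) (Cmult (Cmult b (qq t)) (E (qq t) x)))).
  ring.
Qed.

Lemma fab_cont t a b x : filterlim (fab t a b) (locally x) (locally (fab t a b x)).
Proof.
  apply (@ex_derive_continuous R_AbsRing (prod_NormedModule R_AbsRing R_NormedModule R_NormedModule)).
  eexists. apply fab_derive.
Qed.

Lemma E_0 s : E s 0 = RtoC 1.
Proof. unfold E. rewrite !Rmult_0_r, exp_0, cos_0, sin_0. apply injective_projections; simpl; ring. Qed.

Lemma fab_0 t a b : fab t a b 0 = Cplus a b.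
Proof. unfold fab. rewrite !E_0. ring. Qed.

Lemma pow4 t w : w = pp t \/ w = qq t \/ w = Copp (pp t) \/ w = Copp (qq t) ->
  Cmult w (Cmult w (Cmult w w)) = RtoC (- (4 * t ^ 4)).
Proof.
  intros [H|[H|[H|H]]]; subst; unfold pp, qq; apply injective_projections; simpl; ring.
Qed.

Lemma Vs_sub w d0 d1 d2 d3 e0 e1 e2 e3 :
  Vs w (Cminus d0 e0) (Cminus d1 e1) (Cminus d2 e2) (Cminus d3 e3) = Cminus (Vs w d0 d1 d2 d3) (Vs w e0 e1 e2 e3).
Proof. unfold Vs. ring. Qed.

Lemma limit_eq (f g : R -> C) l :
  (forall x, 0 < x -> f x = g x) ->
  filterlim f (at_right 0) (locally (f 0)) ->
  filterlim g (at_right 0) (locally l) -> f 0 = l.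
Proof.
  intros Heq Hf Hg.
  apply (filterlim_locally_unique (F := at_right 0) f); auto.
  apply (filterlim_ext_loc g f); [|auto].
  unfold at_right, within. exists (mkposreal 1 Rlt_0_1). intros y _ Hy. symmetry; auto.
Qed.

Definition cand (t : R) (a b : C) (j : nat) : R -> C :=
  fab t (Cmult a (Cpow (pp t) j)) (Cmult b (Cpow (qq t) j)).

Lemma Vs_cand_p t a b x :
  Vs (pp t) (cand t a b 0 x) (cand t a b 1 x) (cand t a b 2 x) (cand t a b 3 x) =
  Cmult (Cmult (RtoC 4) (Cpow (pp t) 3)) (Cmult a (E (pp t) x)).
Proof. unfold Vs, cand, fab, E, pp, qq. apply injective_projections; simpl; ring. Qed.

Lemma Vs_cand_q t a b x :
  Vs (qq t) (cand t a b 0 x) (cand t a b 1 x) (cand t a b 2 x) (cand t a b 3 x) =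
  Cmult (Cmult (RtoC 4) (Cpow (qq t) 3)) (Cmult b (E (qq t) x)).
Proof. unfold Vs, cand, fab, E, pp, qq. apply injective_projections; simpl; ring. Qed.

Lemma Vs_cand_mp t a b x :
  Vs (Copp (pp t)) (cand t a b 0 x) (cand t a b 1 x) (cand t a b 2 x) (cand t a b 3 x) = RtoC 0.
Proof. unfold Vs, cand, fab, E, pp, qq. apply injective_projections; simpl; ring. Qed.

Lemma Vs_cand_mq t a b x :
  Vs (Copp (qq t)) (cand t a b 0 x) (cand t a b 1 x) (cand t a b 2 x) (cand t a b 3 x) = RtoC 0.
Proof. unfold Vs, cand, fab, E, pp, qq. apply injective_projections; simpl; ring. Qed.

Lemma Cnz (z : C) : fst z <> 0 \/ snd z <> 0 -> z <> RtoC 0.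
Proof. intros [H|H] E0; subst; simpl in H; lra. Qed.

Lemma Cminus_0 (x y : C) : Cminus x y = RtoC 0 -> x = y.
Proof. intros H. transitivity (Cplus (Cminus x y) y). ring. rewrite H. ring. Qed.

Lemma pp_nz t : 0 < t -> pp t <> RtoC 0.
Proof. intros; apply Cnz; simpl; lra. Qed.
Lemma qq_nz t : 0 < t -> qq t <> RtoC 0.
Proof. intros; apply Cnz; simpl; lra. Qed.
Lemma ppqq_nz t : 0 < t -> Cminus (Cmult (pp t) (pp t)) (Cmult (qq t) (qq t)) <> RtoC 0.
Proof. intros; apply Cnz; simpl; right. intro. nra. Qed.
Lemma pp3_nz t : 0 < t -> Cmult (RtoC 4) (Cpow (pp t) 3) <> RtoC 0.
Proof. intros; apply Cnz; simpl; left. assert (0 < t*t*t) by (repeat apply Rmult_lt_0_compat; auto). intro. nra. Qed.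
Lemma qq3_nz t : 0 < t -> Cmult (RtoC 4) (Cpow (qq t) 3) <> RtoC 0.
Proof. intros; apply Cnz; simpl; left. assert (0 < t*t*t) by (repeat apply Rmult_lt_0_compat; auto). intro. nra. Qed.

Lemma cand_0 t a b j : cand t a b j 0 = Cplus (Cmult a (Cpow (pp t) j)) (Cmult b (Cpow (qq t) j)).
Proof. unfold cand. apply fab_0. Qed.

Lemma cand_lim t a b j : filterlim (cand t a b j) (at_right 0) (locally (cand t a b j 0)).
Proof. apply cont_at_right. apply fab_cont. Qed.

Lemma H_rep al al1 al2 lam t u : 0 < t -> lam = - (4 * t ^ 4) ->
  H_eig al al1 al2 lam u ->
  exists a b, (forall x, 0 <= x -> u x = fab t a b x) /\
    Cplus (Cmult a (Cpow (pp t) 2)) (Cmult b (Cpow (qq t) 2)) =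
      Cplus (Cmult al (Cplus a b)) (Cmult (RtoC al1) (Cplus (Cmult a (pp t)) (Cmult b (qq t)))) /\
    Cplus (Cmult a (Cpow (pp t) 3)) (Cmult b (Cpow (qq t) 3)) =
      Copp (Cplus (Cmult (RtoC al2) (Cplus a b)) (Cmult (Cconj al) (Cplus (Cmult a (pp t)) (Cmult b (qq t))))).
Proof.
  intros Ht Hlam H.
  destruct H as (u1&u2&u3&u4&Hd&L0&L1&L2&L3&S0&S1&S2&S3&S4&BC1&BC2&H4).
  assert (Hw : forall w, w = pp t \/ w = qq t \/ w = Copp (pp t) \/ w = Copp (qq t) ->
     Cmult w (Cmult w (Cmult w w)) = RtoC lam) by (intros; rewrite Hlam; apply pow4; auto).
  destruct (ode_mode u u1 u2 u3 u4 (RtoC lam) (pp t) Hd H4 (Hw (pp t) ltac:(tauto))) as [cp Hcp].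
  destruct (ode_mode u u1 u2 u3 u4 (RtoC lam) (qq t) Hd H4 (Hw (qq t) ltac:(tauto))) as [cq Hcq].
  destruct (ode_mode u u1 u2 u3 u4 (RtoC lam) (Copp (pp t)) Hd H4 (Hw (Copp (pp t)) ltac:(tauto))) as [cmp Hcmp].
  destruct (ode_mode u u1 u2 u3 u4 (RtoC lam) (Copp (qq t)) Hd H4 (Hw (Copp (qq t)) ltac:(tauto))) as [cmq Hcmq].
  assert (Z1 : cmp = RtoC 0) by (apply (growing_zero u u1 u2 u3 (Copp (pp t))); auto; simpl; lra).
  assert (Z2 : cmq = RtoC 0) by (apply (growing_zero u u1 u2 u3 (Copp (qq t))); auto; simpl; lra).
  subst cmp cmq.
  set (a := Cmult cp (Cinv (Cmult (RtoC 4) (Cpow (pp t) 3)))).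
  set (b := Cmult cq (Cinv (Cmult (RtoC 4) (Cpow (qq t) 3)))).
  assert (Hpos : forall x, 0 < x ->
     u x = cand t a b 0 x /\ u1 x = cand t a b 1 x /\ u2 x = cand t a b 2 x /\ u3 x = cand t a b 3 x).
  { intros x Hx.
    destruct (vand0 (pp t) (qq t) (Cminus (u x) (cand t a b 0 x)) (Cminus (u1 x) (cand t a b 1 x))
       (Cminus (u2 x) (cand t a b 2 x)) (Cminus (u3 x) (cand t a b 3 x))
       (pp_nz t Ht) (qq_nz t Ht) (ppqq_nz t Ht)) as (D0 & D1 & D2 & D3).
    - rewrite Vs_sub. change (Vs (pp t) (u x) (u1 x) (u2 x) (u3 x)) with (Lw (pp t) u u1 u2 u3 x).
      rewrite Hcp, Vs_cand_p by auto. unfold a. field; repeat split; first [apply pp_nz; auto | apply pp3_nz; auto].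
    - rewrite Vs_sub. change (Vs (Copp (pp t)) (u x) (u1 x) (u2 x) (u3 x)) with (Lw (Copp (pp t)) u u1 u2 u3 x).
      rewrite Hcmp, Vs_cand_mp by auto. ring.
    - rewrite Vs_sub. change (Vs (qq t) (u x) (u1 x) (u2 x) (u3 x)) with (Lw (qq t) u u1 u2 u3 x).
      rewrite Hcq, Vs_cand_q by auto. unfold b. field; repeat split; first [apply qq_nz; auto | apply qq3_nz; auto].
    - rewrite Vs_sub. change (Vs (Copp (qq t)) (u x) (u1 x) (u2 x) (u3 x)) with (Lw (Copp (qq t)) u u1 u2 u3 x).
      rewrite Hcmq, Vs_cand_mq by auto. ring.
    - repeat split; apply Cminus_0; auto. }
  assert (V0 : u 0 = cand t a b 0 0) by (apply (limit_eq u (cand t a b 0)); auto; [intros; apply Hpos; auto | apply cand_lim]).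
  assert (V1 : u1 0 = cand t a b 1 0) by (apply (limit_eq u1 (cand t a b 1)); auto; [intros; apply Hpos; auto | apply cand_lim]).
  assert (V2 : u2 0 = cand t a b 2 0) by (apply (limit_eq u2 (cand t a b 2)); auto; [intros; apply Hpos; auto | apply cand_lim]).
  assert (V3 : u3 0 = cand t a b 3 0) by (apply (limit_eq u3 (cand t a b 3)); auto; [intros; apply Hpos; auto | apply cand_lim]).
  rewrite !cand_0 in V0, V1, V2, V3.
  exists a, b. split; [|split].
  - intros x Hx. destruct (Req_dec x 0) as [->|Hx0].
    + rewrite V0, fab_0. simpl. ring.
    + destruct (Hpos x ltac:(lra)) as [-> _]. unfold cand. f_equal; simpl; ring.
  - rewrite <- V2. rewrite BC1, V0, V1. simpl. ring.
  - rewrite <- V3. rewrite BC2, V0, V1. simpl. ring.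
Qed.

Lemma cand_derive t a b j x : is_derive (cand t a b j) x (cand t a b (S j) x).
Proof.
  unfold cand. eapply is_derive_Cconv; [intros; reflexivity| | apply fab_derive].
  unfold fab. simpl. change (@eq C
    (Cplus (Cmult (Cmult (Cmult a (Cpow (pp t) j)) (pp t)) (E (pp t) x))
       (Cmult (Cmult (Cmult b (Cpow (qq t) j)) (qq t)) (E (qq t) x)))
    (Cplus (Cmult (Cmult a (Cmult (pp t) (Cpow (pp t) j))) (E (pp t) x))
       (Cmult (Cmult b (Cmult (qq t) (Cpow (qq t) j))) (E (qq t) x)))). ring.
Qed.

Lemma pp4 t : Cpow (pp t) 4 = RtoC (- (4 * t ^ 4)).
Proof. unfold pp. apply injective_projections; simpl; ring. Qed.
Lemma qq4 t : Cpow (qq t) 4 = RtoC (- (4 * t ^ 4)).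
Proof. unfold qq. apply injective_projections; simpl; ring. Qed.

Lemma H_con al al1 al2 lam t a b : 0 < t -> lam = - (4 * t ^ 4) ->
    Cplus (Cmult a (Cpow (pp t) 2)) (Cmult b (Cpow (qq t) 2)) =
      Cplus (Cmult al (Cplus a b)) (Cmult (RtoC al1) (Cplus (Cmult a (pp t)) (Cmult b (qq t)))) ->
    Cplus (Cmult a (Cpow (pp t) 3)) (Cmult b (Cpow (qq t) 3)) =
      Copp (Cplus (Cmult (RtoC al2) (Cplus a b)) (Cmult (Cconj al) (Cplus (Cmult a (pp t)) (Cmult b (qq t))))) ->
  H_eig al al1 al2 lam (fab t a b).
Proof.
  intros Ht Hlam B1 B2.
  assert (Hc0 : forall x, fab t a b x = cand t a b 0 x).
  { intros. unfold cand. change (Cpow (pp t) 0) with (RtoC 1). change (Cpow (qq t) 0) with (RtoC 1).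
    rewrite !Cmult_1_r. reflexivity. }
  exists (cand t a b 1), (cand t a b 2), (cand t a b 3), (cand t a b 4).
  assert (Hfe : fab t a b = cand t a b 0) by (apply functional_extensionality; exact Hc0).
  rewrite Hfe.
  split; [|split; [|split; [|split; [|split; [|split; [|split; [|split; [|split; [|split; [|split; [|split]]]]]]]]]]].
  - intros x _. repeat split; apply cand_derive.
  - apply cand_lim.
  - apply cand_lim.
  - apply cand_lim.
  - apply cand_lim.
  - apply sqint_ab; auto.
  - apply sqint_ab; auto.
  - apply sqint_ab; auto.
  - apply sqint_ab; auto.
  - apply sqint_ab; auto.
  - rewrite !cand_0. rewrite B1.
    change (Cpow (pp t) 0) with (RtoC 1). change (Cpow (qq t) 0) with (RtoC 1).
    change (Cpow (pp t) 1) with (Cmult (pp t) (RtoC 1)). change (Cpow (qq t) 1) with (Cmult (qq t) (RtoC 1)).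
    ring.
  - rewrite !cand_0. rewrite B2.
    change (Cpow (pp t) 0) with (RtoC 1). change (Cpow (qq t) 0) with (RtoC 1).
    change (Cpow (pp t) 1) with (Cmult (pp t) (RtoC 1)). change (Cpow (qq t) 1) with (Cmult (qq t) (RtoC 1)).
    ring.
  - intros x _. unfold cand, fab. rewrite (pp4 t), (qq4 t), <- Hlam.
    change (Cpow (pp t) 0) with (RtoC 1). change (Cpow (qq t) 0) with (RtoC 1).
    ring.
Qed.

Ltac cring := first [ring | apply injective_projections; simpl; ring].

Definition Mker (m11 m12 m21 m22 : C) (w : C * C) : Prop :=
  Cplus (Cmult m11 (fst w)) (Cmult m12 (snd w)) = RtoC 0 /\
  Cplus (Cmult m21 (fst w)) (Cmult m22 (snd w)) = RtoC 0.

Definition Cdet (m11 m12 m21 m22 : C) : C := Cminus (Cmult m11 m22) (Cmult m12 m21).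

Fixpoint csum (cs : list C) (ws : list (C * C)) : C * C :=
  match cs, ws with
  | c :: cs', w :: ws' => (Cplus (Cmult c (fst w)) (fst (csum cs' ws')),
                           Cplus (Cmult c (snd w)) (snd (csum cs' ws')))
  | _, _ => (RtoC 0, RtoC 0)
  end.

Lemma coord {X} (D : X -> Prop) (g1 g2 : X -> C) us ws :
  List.Forall2 (fun (u : X -> C) (w : C * C) => forall x, D x -> u x = Cplus (Cmult (fst w) (g1 x)) (Cmult (snd w) (g2 x))) us ws ->
  forall cs x, D x -> lin_comb cs us x = Cplus (Cmult (fst (csum cs ws)) (g1 x)) (Cmult (snd (csum cs ws)) (g2 x)).
Proof.
  induction 1 as [|u w us ws Huw Hrest IH]; intros cs x Hx.
  - destruct cs; unfold lin_comb; simpl; cring.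
  - destruct cs as [|c cs].
    + unfold lin_comb; simpl; cring.
    + change (lin_comb (c :: cs) (u :: us) x) with (Cplus (Cmult c (u x)) (lin_comb cs us x)).
      rewrite IH by auto. rewrite Huw by auto. simpl. cring.
Qed.

Lemma csum_zeros (n : nat) (ws : list (C * C)) : csum (repeat (RtoC 0) n) ws = (RtoC 0, RtoC 0).
Proof.
  revert ws. induction n as [|n IHn]; intros ws; destruct ws as [|w ws]; simpl; auto.
  rewrite IHn. simpl. f_equal; cring.
Qed.

Lemma Forall_choice {T1 T2 : Type} (P : T1 -> T2 -> Prop) (l : list T1) :
  List.Forall (fun a => exists b : T2, P a b) l -> exists lb : list T2, List.Forall2 P l lb.
Proof.
  induction 1 as [|a l [b Hb] _ [lb IH]].
  - exists nil; constructor.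
  - exists (b :: lb); constructor; auto.
Qed.

Lemma Cmult_eq0 (a b : C) : Cmult a b = RtoC 0 -> a = RtoC 0 \/ b = RtoC 0.
Proof.
  intros H. destruct (Ceq_dec a (RtoC 0)) as [Ha|Ha]; [left; auto|right].
  transitivity (Cmult (Cinv a) (Cmult a b)). field; auto. rewrite H. cring.
Qed.

Lemma two_dep (v v' : C * C) :
  Cminus (Cmult (fst v) (snd v')) (Cmult (snd v) (fst v')) = RtoC 0 ->
  exists c1 c2, (c1 <> RtoC 0 \/ c2 <> RtoC 0) /\
    Cplus (Cmult c1 (fst v)) (Cmult c2 (fst v')) = RtoC 0 /\
    Cplus (Cmult c1 (snd v)) (Cmult c2 (snd v')) = RtoC 0.
Proof.
  destruct v as [v0 v1], v' as [w0 w1]; simpl. intros Hd.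
  destruct (Ceq_dec v0 (RtoC 0)) as [H0|H0].
  - destruct (Ceq_dec v1 (RtoC 0)) as [H1|H1].
    + exists (RtoC 1), (RtoC 0). subst. split; [left; intro Hc; injection Hc; lra|split; cring].
    + exists w1, (Copp v1). split; [right|split].
      * intro Hc. apply H1. transitivity (Copp (Copp v1)). cring. rewrite Hc. cring.
      * subst v0. transitivity (Cminus (Cmult (RtoC 0) w1) (Cmult v1 w0)). cring. rewrite Hd. cring.
      * cring.
  - exists w0, (Copp v0). split; [right|split].
    + intro Hc. apply H0. transitivity (Copp (Copp v0)). cring. rewrite Hc. cring.
    + cring.
    + transitivity (Copp (Cminus (Cmult v0 w1) (Cmult v1 w0))). cring. rewrite Hd. cring.
Qed.

Definition indepC (ws : list (C * C)) : Prop :=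
  forall cs, length cs = length ws -> csum cs ws = (RtoC 0, RtoC 0) -> List.Forall (fun c => c = RtoC 0) cs.

Definition Cdet2 (v v' : C * C) : C := Cminus (Cmult (fst v) (snd v')) (Cmult (snd v) (fst v')).

Lemma RtoC1_nz : RtoC 1 <> RtoC 0.
Proof. intro Hc; injection Hc; lra. Qed.

Lemma indepC_len0 ws : indepC ws -> (forall v, In v ws -> v = (RtoC 0, RtoC 0)) -> length ws = 0%nat.
Proof.
  intros Hi Hz. destruct ws as [|w ws]; auto. exfalso.
  specialize (Hi (RtoC 1 :: repeat (RtoC 0) (length ws))).
  simpl in Hi. rewrite repeat_length in Hi. specialize (Hi eq_refl).
  rewrite csum_zeros in Hi. rewrite (Hz w) in Hi by (left; auto). simpl in Hi.
  assert (H : List.Forall (fun c => c = RtoC 0) (RtoC 1 :: repeat (RtoC 0) (length ws))).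
  { apply Hi. f_equal; cring. }
  inversion H; subst. apply RtoC1_nz; auto.
Qed.

Lemma indepC_two ws w1 w2 : indepC (w1 :: w2 :: ws) -> Cdet2 w1 w2 <> RtoC 0.
Proof.
  intros Hi Hd. destruct (two_dep w1 w2 Hd) as (c1 & c2 & Hnz & E1 & E2).
  specialize (Hi (c1 :: c2 :: repeat (RtoC 0) (length ws))).
  simpl in Hi. rewrite repeat_length in Hi. specialize (Hi eq_refl).
  rewrite csum_zeros in Hi. simpl in Hi.
  assert (H : List.Forall (fun c => c = RtoC 0) (c1 :: c2 :: repeat (RtoC 0) (length ws))).
  { apply Hi. f_equal.
    - rewrite <- E1 at 2. cring.
    - rewrite <- E2 at 2. cring. }
  inversion H as [|? ? H1 H']; subst. inversion H'; subst. destruct Hnz; auto.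
Qed.

Lemma indepC_len1 ws : indepC ws -> (forall v v', In v ws -> In v' ws -> Cdet2 v v' = RtoC 0) -> (length ws <= 1)%nat.
Proof.
  intros Hi Hd. destruct ws as [|w1 [|w2 ws]]; simpl; try lia.
  exfalso. apply (indepC_two ws w1 w2 Hi). apply Hd; simpl; auto.
Qed.

Lemma indepC_len2 ws : indepC ws -> (length ws <= 2)%nat.
Proof.
  intros Hi. destruct ws as [|w1 [|w2 [|w3 ws]]]; simpl; try lia.
  exfalso.
  pose proof (indepC_two _ _ _ Hi) as Hd12.
  specialize (Hi (Cdet2 w2 w3 :: Copp (Cdet2 w1 w3) :: Cdet2 w1 w2 :: repeat (RtoC 0) (length ws))).
  simpl in Hi. rewrite repeat_length in Hi. specialize (Hi eq_refl).
  rewrite csum_zeros in Hi. simpl in Hi.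
  assert (H : List.Forall (fun c => c = RtoC 0) (Cdet2 w2 w3 :: Copp (Cdet2 w1 w3) :: Cdet2 w1 w2 :: repeat (RtoC 0) (length ws))).
  { apply Hi. unfold Cdet2. f_equal; cring. }
  inversion H as [|? ? H1 H']; subst. inversion H' as [|? ? H2 H'']; subst.
  inversion H''; subst. auto.
Qed.

Definition Mzero (m11 m12 m21 m22 : C) : Prop :=
  m11 = RtoC 0 /\ m12 = RtoC 0 /\ m21 = RtoC 0 /\ m22 = RtoC 0.

Lemma kernel_det0 m11 m12 m21 m22 v v' :
  ~ Mzero m11 m12 m21 m22 -> Mker m11 m12 m21 m22 v -> Mker m11 m12 m21 m22 v' -> Cdet2 v v' = RtoC 0.
Proof.
  destruct v as [v0 v1], v' as [w0 w1]; unfold Mker, Cdet2; simpl.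
  intros Hnz [R1 R2] [S1 S2].
  assert (A11 : Cmult m11 (Cminus (Cmult v0 w1) (Cmult v1 w0)) = RtoC 0).
  { transitivity (Cminus (Cmult (Cplus (Cmult m11 v0) (Cmult m12 v1)) w1) (Cmult (Cplus (Cmult m11 w0) (Cmult m12 w1)) v1)).
    cring. rewrite R1, S1. cring. }
  assert (A12 : Cmult m12 (Cminus (Cmult v0 w1) (Cmult v1 w0)) = RtoC 0).
  { transitivity (Cminus (Cmult (Cplus (Cmult m11 w0) (Cmult m12 w1)) v0) (Cmult (Cplus (Cmult m11 v0) (Cmult m12 v1)) w0)).
    cring. rewrite R1, S1. cring. }
  assert (A21 : Cmult m21 (Cminus (Cmult v0 w1) (Cmult v1 w0)) = RtoC 0).
  { transitivity (Cminus (Cmult (Cplus (Cmult m21 v0) (Cmult m22 v1)) w1) (Cmult (Cplus (Cmult m21 w0) (Cmult m22 w1)) v1)).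
    cring. rewrite R2, S2. cring. }
  assert (A22 : Cmult m22 (Cminus (Cmult v0 w1) (Cmult v1 w0)) = RtoC 0).
  { transitivity (Cminus (Cmult (Cplus (Cmult m21 w0) (Cmult m22 w1)) v0) (Cmult (Cplus (Cmult m21 v0) (Cmult m22 v1)) w0)).
    cring. rewrite R2, S2. cring. }
  destruct (Cmult_eq0 _ _ A11) as [H1|H1]; auto.
  destruct (Cmult_eq0 _ _ A12) as [H2|H2]; auto.
  destruct (Cmult_eq0 _ _ A21) as [H3|H3]; auto.
  destruct (Cmult_eq0 _ _ A22) as [H4|H4]; auto.
  exfalso; apply Hnz; unfold Mzero; auto.
Qed.

Lemma det_nz_kernel m11 m12 m21 m22 v :
  Cdet m11 m12 m21 m22 <> RtoC 0 -> Mker m11 m12 m21 m22 v -> v = (RtoC 0, RtoC 0).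
Proof.
  destruct v as [v0 v1]; unfold Mker, Cdet; simpl. intros Hd [R1 R2].
  assert (A0 : Cmult (Cminus (Cmult m11 m22) (Cmult m12 m21)) v0 = RtoC 0).
  { transitivity (Cminus (Cmult m22 (Cplus (Cmult m11 v0) (Cmult m12 v1))) (Cmult m12 (Cplus (Cmult m21 v0) (Cmult m22 v1)))).
    cring. rewrite R1, R2. cring. }
  assert (A1 : Cmult (Cminus (Cmult m11 m22) (Cmult m12 m21)) v1 = RtoC 0).
  { transitivity (Cminus (Cmult m11 (Cplus (Cmult m21 v0) (Cmult m22 v1))) (Cmult m21 (Cplus (Cmult m11 v0) (Cmult m12 v1)))).
    cring. rewrite R1, R2. cring. }
  destruct (Cmult_eq0 _ _ A0) as [H|H]; [contradiction|].
  destruct (Cmult_eq0 _ _ A1) as [H'|H']; [contradiction|].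
  subst; auto.
Qed.

Lemma det0_kernel m11 m12 m21 m22 :
  Cdet m11 m12 m21 m22 = RtoC 0 -> ~ Mzero m11 m12 m21 m22 ->
  exists v, Mker m11 m12 m21 m22 v /\ v <> (RtoC 0, RtoC 0).
Proof.
  unfold Cdet, Mker. intros Hd Hnz.
  destruct (Ceq_dec m11 (RtoC 0)) as [H11|H11];
  [destruct (Ceq_dec m12 (RtoC 0)) as [H12|H12]|].
  - exists (m22, Copp m21). simpl. split; [split|].
    + subst; cring.
    + cring.
    + intro Hv. pose proof (f_equal snd Hv) as Ha; pose proof (f_equal fst Hv) as Hb; cbn [fst snd] in Ha, Hb. apply Hnz. unfold Mzero. repeat split; auto.
      transitivity (Copp (Copp m21)). cring. rewrite Ha. cring.
  - exists (m12, Copp m11). simpl. split; [split|].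
    + cring.
    + transitivity (Copp (Cminus (Cmult m11 m22) (Cmult m12 m21))). cring. rewrite Hd. cring.
    + intro Hv. pose proof (f_equal snd Hv) as Ha; pose proof (f_equal fst Hv) as Hb; cbn [fst snd] in Ha, Hb. auto.
  - exists (m12, Copp m11). simpl. split; [split|].
    + cring.
    + transitivity (Copp (Cminus (Cmult m11 m22) (Cmult m12 m21))). cring. rewrite Hd. cring.
    + intro Hv. pose proof (f_equal snd Hv) as Ha; pose proof (f_equal fst Hv) as Hb; cbn [fst snd] in Ha, Hb. apply H11.
      transitivity (Copp (Copp m11)). cring. rewrite Ha. cring.
Qed.

Section Dim.
Variable X : Type.
Variable D : X -> Prop.
Variable Eg : (X -> C) -> Prop.
Variables g1 g2 : X -> C.
Variables m11 m12 m21 m22 : C.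
Hypothesis Hind : forall c1 c2, (forall x, D x -> Cplus (Cmult c1 (g1 x)) (Cmult c2 (g2 x)) = RtoC 0) ->
  c1 = RtoC 0 /\ c2 = RtoC 0.
Hypothesis HE1 : forall u, Eg u -> exists w, Mker m11 m12 m21 m22 w /\
  forall x, D x -> u x = Cplus (Cmult (fst w) (g1 x)) (Cmult (snd w) (g2 x)).
Hypothesis HE2 : forall w, Mker m11 m12 m21 m22 w -> exists u, Eg u /\
  forall x, D x -> u x = Cplus (Cmult (fst w) (g1 x)) (Cmult (snd w) (g2 x)).

Definition Rep (u : X -> C) (w : C * C) : Prop :=
  forall x, D x -> u x = Cplus (Cmult (fst w) (g1 x)) (Cmult (snd w) (g2 x)).

Lemma ub_helper us : List.Forall Eg us -> lin_indep D us ->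
  exists ws, List.Forall (Mker m11 m12 m21 m22) ws /\ indepC ws /\ length us = length ws.
Proof.
  intros HF Hli.
  assert (HF' : List.Forall (fun u => exists w, Mker m11 m12 m21 m22 w /\ Rep u w) us).
  { eapply List.Forall_impl; [|exact HF]. intros u Hu. apply HE1; auto. }
  destruct (Forall_choice _ _ HF') as [ws Hws].
  assert (Hlen : length us = length ws) by (eapply List.Forall2_length; eauto).
  exists ws. split; [|split; auto].
  - clear -Hws. induction Hws; constructor; tauto.
  - intros cs Hcs Hsum. apply Hli. lia.
    intros x Hx. rewrite (coord D g1 g2 us ws); auto.
    + rewrite Hsum. simpl. cring.
    + eapply List.Forall2_impl; [|exact Hws]. intros u w [_ H]. exact H.
Qed.

Lemma lb_helper us ws : List.Forall2 Rep us ws -> indepC ws -> lin_indep D us.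
Proof.
  intros H2 Hi cs Hcs Hz.
  assert (Hlen : length us = length ws) by (eapply List.Forall2_length; eauto).
  apply Hi. lia.
  destruct (Hind (fst (csum cs ws)) (snd (csum cs ws))) as [E1 E2].
  - intros x Hx. rewrite <- (coord D g1 g2 us ws H2 cs x Hx). auto.
  - destruct (csum cs ws); simpl in *; subst; auto.
Qed.

Lemma indepC_nil : indepC nil.
Proof. intros cs Hcs _. destruct cs; simpl in Hcs; [constructor|discriminate]. Qed.

Lemma indepC_one v : v <> (RtoC 0, RtoC 0) -> indepC (v :: nil).
Proof.
  intros Hv cs Hcs Hs. destruct cs as [|c [|c' cs]]; simpl in Hcs; try discriminate.
  simpl in Hs.
  pose proof (f_equal fst Hs) as H1. pose proof (f_equal snd Hs) as H2. cbn [fst snd] in H1, H2.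
  constructor; [|constructor].
  destruct (Ceq_dec c (RtoC 0)) as [Hc|Hc]; auto. exfalso. apply Hv.
  destruct v as [v0 v1]; simpl in *.
  assert (A0 : Cmult c v0 = RtoC 0) by (rewrite <- H1; cring).
  assert (A1 : Cmult c v1 = RtoC 0) by (rewrite <- H2; cring).
  destruct (Cmult_eq0 _ _ A0); [contradiction|]. destruct (Cmult_eq0 _ _ A1); [contradiction|]. subst; auto.
Qed.

Lemma indepC_e12 : indepC ((RtoC 1, RtoC 0) :: (RtoC 0, RtoC 1) :: nil).
Proof.
  intros cs Hcs Hs. destruct cs as [|c [|c' [|c'' cs]]]; simpl in Hcs; try discriminate.
  simpl in Hs.
  pose proof (f_equal fst Hs) as H1. pose proof (f_equal snd Hs) as H2. cbn [fst snd] in H1, H2.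
  constructor; [|constructor; [|constructor]].
  - rewrite <- H1. cring.
  - rewrite <- H2. cring.
Qed.

Lemma dim0 : Cdet m11 m12 m21 m22 <> RtoC 0 -> subspace_dim D Eg 0.
Proof.
  intros Hd. split.
  - exists nil. split; auto. split; [constructor|]. apply (lb_helper nil nil); [constructor|apply indepC_nil].
  - intros us HF Hli. destruct (ub_helper us HF Hli) as (ws & HM & Hi & Hl).
    rewrite Hl, (indepC_len0 ws Hi); auto.
    intros v Hv. apply (det_nz_kernel m11 m12 m21 m22); auto.
    rewrite List.Forall_forall in HM; auto.
Qed.

Lemma dim1 : Cdet m11 m12 m21 m22 = RtoC 0 -> ~ Mzero m11 m12 m21 m22 -> subspace_dim D Eg 1.
Proof.
  intros Hd Hnz. split.
  - destruct (det0_kernel _ _ _ _ Hd Hnz) as (v & Hv & Hv0).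
    destruct (HE2 v Hv) as (u & Hu & Hr).
    exists (u :: nil). split; auto. split; [constructor; auto|].
    apply (lb_helper (u :: nil) (v :: nil)); [constructor; auto|apply indepC_one; auto].
  - intros us HF Hli. destruct (ub_helper us HF Hli) as (ws & HM & Hi & Hl).
    rewrite Hl. apply indepC_len1; auto.
    rewrite List.Forall_forall in HM.
    intros v v' Hv Hv'. apply (kernel_det0 m11 m12 m21 m22); auto.
Qed.

Lemma dim2 : Mzero m11 m12 m21 m22 -> subspace_dim D Eg 2.
Proof.
  intros Hz. destruct Hz as (Z1 & Z2 & Z3 & Z4). split.
  - destruct (HE2 (RtoC 1, RtoC 0)) as (u1 & Hu1 & Hr1). { subst; split; simpl; cring. }
    destruct (HE2 (RtoC 0, RtoC 1)) as (u2 & Hu2 & Hr2). { subst; split; simpl; cring. }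
    exists (u1 :: u2 :: nil). split; auto. split; [constructor; auto|].
    apply (lb_helper _ ((RtoC 1, RtoC 0) :: (RtoC 0, RtoC 1) :: nil)); [constructor; auto|apply indepC_e12].
  - intros us HF Hli. destruct (ub_helper us HF Hli) as (ws & HM & Hi & Hl).
    rewrite Hl. apply indepC_len2; auto.
Qed.

Lemma nz_iff : (exists u, Eg u /\ exists x, D x /\ u x <> RtoC 0) <-> Cdet m11 m12 m21 m22 = RtoC 0.
Proof.
  split.
  - intros (u & Hu & x & Hx & Hux).
    destruct (Ceq_dec (Cdet m11 m12 m21 m22) (RtoC 0)) as [|Hd]; auto. exfalso.
    destruct (HE1 u Hu) as (w & Hw & Hr).
    rewrite (det_nz_kernel _ _ _ _ w Hd Hw) in Hr.
    apply Hux. rewrite Hr by auto. simpl. cring.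
  - intros Hd.
    assert (Hv : exists v, Mker m11 m12 m21 m22 v /\ v <> (RtoC 0, RtoC 0)).
    { destruct (classic (Mzero m11 m12 m21 m22)) as [Hz|Hnz].
      - exists (RtoC 1, RtoC 0). destruct Hz as (Z1 & Z2 & Z3 & Z4). subst. split.
        + split; simpl; cring.
        + intro Hc. apply RtoC1_nz. exact (f_equal fst Hc).
      - apply det0_kernel; auto. }
    destruct Hv as (v & Hv & Hv0). destruct (HE2 v Hv) as (u & Hu & Hr).
    exists u. split; auto.
    apply NNPP. intro Hn. apply Hv0.
    destruct (Hind (fst v) (snd v)) as [E1 E2].
    + intros x Hx. rewrite <- Hr by auto. apply NNPP. intro Hne. apply Hn. eauto.
    + destruct v; simpl in *; subst; auto.
Qed.

End Dim.

Lemma sd_unique {X} (D : X -> Prop) E m m' : subspace_dim D E m -> subspace_dim D E m' -> m = m'.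
Proof.
  intros [[us [Hl [HF Hi]]] Hub] [[us' [Hl' [HF' Hi']]] Hub'].
  specialize (Hub us' HF' Hi'). specialize (Hub' us HF Hi). lia.
Qed.

Lemma neg_unique {X} (D : X -> Prop) (Eig : R -> (X -> C) -> Prop) n n' :
  neg_eig_count D Eig n -> neg_eig_count D Eig n' -> n = n'.
Proof.
  intros (l & ms & Hnd & Hlen & Hmem & Hdim & Hsum) (l' & ms' & Hnd' & Hlen' & Hmem' & Hdim' & Hsum').
  set (f := fun lam => epsilon (inhabits 0%nat) (fun m => subspace_dim D (Eig lam) m)).
  assert (Hf : forall l0 ms0, length ms0 = length l0 ->
     (forall i, (i < length l0)%nat -> subspace_dim D (Eig (nth i l0 0)) (nth i ms0 0%nat)) ->
     ms0 = map f l0).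
  { intros l0 ms0 HL HD. apply nth_ext with (d := 0%nat) (d' := 0%nat).
    - rewrite length_map; auto.
    - intros i Hi. rewrite HL in Hi.
      replace (nth i (map f l0) 0%nat) with (nth i (map f l0) (f 0)) by (apply nth_indep; rewrite length_map; auto).
      rewrite map_nth. unfold f.
      pose proof (HD i Hi) as Hs.
      apply (sd_unique D (Eig (nth i l0 0))); auto.
      apply (epsilon_spec (inhabits 0%nat) (fun m => subspace_dim D (Eig (nth i l0 0)) m)).
      eauto. }
  rewrite (Hf l ms Hlen Hdim) in Hsum. rewrite (Hf l' ms' Hlen' Hdim') in Hsum'.
  assert (HP : Permutation l l').
  { apply NoDup_Permutation; auto. intros x. rewrite <- Hmem, <- Hmem'. tauto. }
  subst n n'. change (list_sum (map f l) = list_sum (map f l')).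
  apply Permutation_list_sum. apply Permutation_map. auto.
Qed.

Definition mum (x y n : R) : R := (x + y - sqrt ((x - y) ^ 2 + 4 * n)) / 2.
Definition mup (x y n : R) : R := (x + y + sqrt ((x - y) ^ 2 + 4 * n)) / 2.

Lemma S_facts x y n : 0 <= n ->
  let S := sqrt ((x - y) ^ 2 + 4 * n) in 0 <= S /\ S ^ 2 = (x - y) ^ 2 + 4 * n /\ - S <= x - y <= S.
Proof.
  intros Hn S. assert (H0 : 0 <= (x - y) ^ 2 + 4 * n) by (pose proof (pow2_ge_0 (x - y)); lra).
  split; [apply sqrt_pos|split].
  - unfold S. apply pow2_sqrt. auto.
  - assert (Ha : Rabs (x - y) <= S).
    { unfold S. rewrite <- sqrt_Rsqr_abs. apply sqrt_le_1_alt. unfold Rsqr. nra. }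
    pose proof (Rle_abs (x - y)). pose proof (Rle_abs (- (x - y))). rewrite Rabs_Ropp in *. lra.
Qed.

Lemma mum_facts x y n : 0 <= n ->
  mum x y n <= x /\ mum x y n <= y /\ (x - mum x y n) * (y - mum x y n) = n.
Proof.
  intros Hn. destruct (S_facts x y n Hn) as (H0 & H1 & H2). unfold mum.
  set (S := sqrt ((x - y) ^ 2 + 4 * n)) in *.
  split; [lra|split; [lra|]]. nra.
Qed.

Lemma mup_facts x y n : 0 <= n ->
  x <= mup x y n /\ y <= mup x y n /\ (mup x y n - x) * (mup x y n - y) = n.
Proof.
  intros Hn. destruct (S_facts x y n Hn) as (H0 & H1 & H2). unfold mup.
  set (S := sqrt ((x - y) ^ 2 + 4 * n)) in *.
  split; [lra|split; [lra|]]. nra.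
Qed.

Lemma mum_le_mup x y n : mum x y n <= mup x y n.
Proof. unfold mum, mup. pose proof (sqrt_pos ((x - y) ^ 2 + 4 * n)). lra. Qed.

Lemma mu_sum x y n : mum x y n + mup x y n = x + y.
Proof. unfold mum, mup. lra. Qed.

Lemma mu_prod x y n : 0 <= n -> mum x y n * mup x y n = x * y - n.
Proof.
  intros Hn. destruct (S_facts x y n Hn) as (H0 & H1 & H2). unfold mum, mup.
  set (S := sqrt ((x - y) ^ 2 + 4 * n)) in *. nra.
Qed.

Lemma F1 x y n c : 0 <= n -> c < x -> n < (x - c) * (y - c) -> c < mum x y n.
Proof.
  intros Hn Hx Hp. destruct (S_facts x y n Hn) as (H0 & H1 & H2). unfold mum.
  set (S := sqrt ((x - y) ^ 2 + 4 * n)) in *.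
  assert (Hy : c < y) by nra.
  assert (S < x + y - 2 * c).
  { apply Rnot_le_lt. intro Hle. nra. }
  lra.
Qed.

Lemma F2 x y n c : 0 <= n -> x < c -> n < (x - c) * (y - c) -> mup x y n < c.
Proof.
  intros Hn Hx Hp. destruct (S_facts x y n Hn) as (H0 & H1 & H2). unfold mup.
  set (S := sqrt ((x - y) ^ 2 + 4 * n)) in *.
  assert (Hy : y < c) by nra.
  assert (S < 2 * c - x - y).
  { apply Rnot_le_lt. intro Hle. nra. }
  lra.
Qed.

Lemma both_zero x y n : 0 <= n -> mum x y n = 0 -> mup x y n = 0 -> x = 0 /\ y = 0 /\ n = 0.
Proof.
  intros Hn H1 H2. destruct (mum_facts x y n Hn) as (A1 & A2 & A3).
  destruct (mup_facts x y n Hn) as (B1 & B2 & B3). rewrite H1 in *. rewrite H2 in *.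
  assert (x = 0) by lra. assert (y = 0) by lra. subst. split; auto. split; auto. lra.
Qed.

Lemma prod_zero x y n : 0 <= n -> (x * y - n = 0 <-> mum x y n = 0 \/ mup x y n = 0).
Proof.
  intros Hn. rewrite <- mu_prod by auto. split.
  - intros H. apply Rmult_integral in H. auto.
  - intros [H|H]; rewrite H; ring.
Qed.

Lemma psd_step x1 y1 zr zi dx dy dz :
  0 <= x1 -> 0 <= y1 -> x1 * y1 = zr ^ 2 + zi ^ 2 -> 0 < dx -> 0 < dy -> dz ^ 2 < dx * dy ->
  (zr + dz) ^ 2 + zi ^ 2 < (x1 + dx) * (y1 + dy).
Proof.
  intros Hx Hy Hn Hdx Hdy Hd.
  assert (H1 : 2 * zr * dz <= x1 * dy + y1 * dx).
  { assert (Hsq : (2 * zr * dz) ^ 2 <= (x1 * dy + y1 * dx) ^ 2).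
    { assert (zr ^ 2 <= x1 * y1) by nra.
      assert ((x1 * dy + y1 * dx) ^ 2 - 4 * (x1 * y1) * (dx * dy) = (x1 * dy - y1 * dx) ^ 2) by ring.
      assert (0 <= (x1 * dy - y1 * dx) ^ 2) by apply pow2_ge_0.
      assert (4 * zr ^ 2 * dz ^ 2 <= 4 * (x1 * y1) * (dx * dy)).
      { assert (0 <= zr ^ 2) by apply pow2_ge_0. assert (0 <= dz ^ 2) by apply pow2_ge_0.
        assert (0 <= x1 * y1) by nra. nra. }
      nra. }
    assert (0 <= x1 * dy + y1 * dx) by nra.
    destruct (Rle_or_lt (2 * zr * dz) 0). lra.
    apply Rsqr_incr_0_var; unfold Rsqr; nra. }
  nra.
Qed.

Section Family.
Variables a1 a2 ar ai : R.

Definition Xf (t : R) : R := a2 + 4 * t ^ 3.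
Definition Yf (t : R) : R := a1 + 2 * t.
Definition Nf (t : R) : R := (ar + 2 * t ^ 2) ^ 2 + ai ^ 2.
Definition gm (t : R) : R := mum (Xf t) (Yf t) (Nf t).
Definition gp (t : R) : R := mup (Xf t) (Yf t) (Nf t).

Lemma Nf_pos t : 0 <= Nf t.
Proof. unfold Nf. pose proof (pow2_ge_0 (ar + 2 * t ^ 2)). pose proof (pow2_ge_0 ai). lra. Qed.

Lemma dz_lt s t : 0 <= s < t -> (2 * (t ^ 2 - s ^ 2)) ^ 2 < (4 * (t ^ 3 - s ^ 3)) * (2 * (t - s)).
Proof.
  intros Hst.
  assert (E : (4 * (t ^ 3 - s ^ 3)) * (2 * (t - s)) - (2 * (t ^ 2 - s ^ 2)) ^ 2 = 4 * (t - s) ^ 2 * (t ^ 2 + s ^ 2)) by ring.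
  assert (0 < (t - s) ^ 2) by (apply pow_lt; lra).
  assert (0 < t ^ 2 + s ^ 2) by nra.
  assert (0 < 4 * (t - s) ^ 2 * (t ^ 2 + s ^ 2)) by (apply Rmult_lt_0_compat; lra).
  lra.
Qed.

Lemma gm_incr s t : 0 <= s < t -> gm s < gm t.
Proof.
  intros Hst. unfold gm. set (c := mum (Xf s) (Yf s) (Nf s)).
  destruct (mum_facts (Xf s) (Yf s) (Nf s) (Nf_pos s)) as (A1 & A2 & A3). fold c in A1, A2, A3.
  assert (Ht3 : s ^ 3 < t ^ 3) by (assert (t ^ 3 - s ^ 3 = (t - s) * (t ^ 2 + t * s + s ^ 2)) by ring; assert (0 < t ^ 2 + t * s + s ^ 2) by nra; assert (0 < (t - s) * (t ^ 2 + t * s + s ^ 2)) by (apply Rmult_lt_0_compat; lra); lra).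
  apply F1. apply Nf_pos.
  - unfold Xf in *. lra.
  - pose proof (psd_step (Xf s - c) (Yf s - c) (ar + 2 * s ^ 2) ai (4 * (t ^ 3 - s ^ 3)) (2 * (t - s)) (2 * (t ^ 2 - s ^ 2))
      ltac:(lra) ltac:(lra) ltac:(unfold Nf in A3; lra) ltac:(lra) ltac:(lra) (dz_lt s t Hst)) as H.
    unfold Nf, Xf, Yf in *.
    replace (ar + 2 * s ^ 2 + 2 * (t ^ 2 - s ^ 2)) with (ar + 2 * t ^ 2) in H by ring.
    replace (a2 + 4 * s ^ 3 - c + 4 * (t ^ 3 - s ^ 3)) with (a2 + 4 * t ^ 3 - c) in H by ring.
    replace (a1 + 2 * s - c + 2 * (t - s)) with (a1 + 2 * t - c) in H by ring.
    exact H.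
Qed.

Lemma gp_incr s t : 0 <= s < t -> gp s < gp t.
Proof.
  intros Hst. unfold gp. set (c := mup (Xf t) (Yf t) (Nf t)).
  destruct (mup_facts (Xf t) (Yf t) (Nf t) (Nf_pos t)) as (A1 & A2 & A3). fold c in A1, A2, A3.
  assert (Ht3 : s ^ 3 < t ^ 3) by (assert (t ^ 3 - s ^ 3 = (t - s) * (t ^ 2 + t * s + s ^ 2)) by ring; assert (0 < t ^ 2 + t * s + s ^ 2) by nra; assert (0 < (t - s) * (t ^ 2 + t * s + s ^ 2)) by (apply Rmult_lt_0_compat; lra); lra).
  apply F2. apply Nf_pos.
  - unfold Xf in *. lra.
  - pose proof (psd_step (c - Xf t) (c - Yf t) (ar + 2 * t ^ 2) ai (4 * (t ^ 3 - s ^ 3)) (2 * (t - s)) (- (2 * (t ^ 2 - s ^ 2)))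
      ltac:(lra) ltac:(lra) ltac:(unfold Nf in A3; lra) ltac:(lra) ltac:(lra) ltac:(pose proof (dz_lt s t Hst); nra)) as H.
    unfold Nf, Xf, Yf in *.
    replace (ar + 2 * t ^ 2 + - (2 * (t ^ 2 - s ^ 2))) with (ar + 2 * s ^ 2) in H by ring.
    replace ((c - (a2 + 4 * t ^ 3) + 4 * (t ^ 3 - s ^ 3)) * (c - (a1 + 2 * t) + 2 * (t - s)))
      with ((a2 + 4 * s ^ 3 - c) * (a1 + 2 * s - c)) in H by ring.
    exact H.
Qed.

Definition qf (t : R) : R := (Xf t - Yf t) ^ 2 + 4 * Nf t.

Lemma qf_pos t : 0 <= qf t.
Proof. unfold qf. pose proof (pow2_ge_0 (Xf t - Yf t)). pose proof (Nf_pos t). lra. Qed.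

Lemma sq_cont : continuity (fun t => sqrt (qf t)).
Proof.
  intros x.
  assert (Hq : continuity qf) by (unfold qf, Xf, Yf, Nf; reg).
  apply (continuity_pt_comp qf sqrt x); auto.
  apply continuity_pt_sqrt. apply qf_pos.
Qed.

Lemma XY_cont : continuity (fun t => Xf t + Yf t).
Proof. unfold Xf, Yf; reg. Qed.

Lemma gm_cont : continuity gm.
Proof.
  intros x. unfold gm, mum.
  change (continuity_pt (fun t => (Xf t + Yf t - sqrt (qf t)) * / 2) x).
  apply continuity_pt_mult; [|apply continuity_pt_const; intros u v; auto].
  apply continuity_pt_minus; [apply XY_cont|apply sq_cont].
Qed.

Lemma gp_cont : continuity gp.
Proof.
  intros x. unfold gp, mup.
  change (continuity_pt (fun t => (Xf t + Yf t + sqrt (qf t)) * / 2) x).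
  apply continuity_pt_mult; [|apply continuity_pt_const; intros u v; auto].
  apply continuity_pt_plus; [apply XY_cont|apply sq_cont].
Qed.

Lemma big_T : exists T, 0 < T /\ 0 < gm T.
Proof.
  set (K := 1 + Rabs a1 + Rabs a2 + Rabs ar + Rabs ai).
  pose proof (Rabs_pos a1). pose proof (Rabs_pos a2). pose proof (Rabs_pos ar). pose proof (Rabs_pos ai).
  assert (B1 : - K <= a1 <= K) by (split; [pose proof (Rle_abs (- a1)); rewrite Rabs_Ropp in *|pose proof (Rle_abs a1)]; unfold K; lra).
  assert (B2 : - K <= a2 <= K) by (split; [pose proof (Rle_abs (- a2)); rewrite Rabs_Ropp in *|pose proof (Rle_abs a2)]; unfold K; lra).
  assert (B3 : - K <= ar <= K) by (split; [pose proof (Rle_abs (- ar)); rewrite Rabs_Ropp in *|pose proof (Rle_abs ar)]; unfold K; lra).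
  assert (B4 : - K <= ai <= K) by (split; [pose proof (Rle_abs (- ai)); rewrite Rabs_Ropp in *|pose proof (Rle_abs ai)]; unfold K; lra).
  assert (HK : 1 <= K) by (unfold K; lra).
  clearbody K.
  set (T := 4 * K). assert (HT : 4 <= T) by (unfold T; lra).
  exists T. split; [lra|].
  assert (T2 : 16 <= T ^ 2) by nra.
  assert (T3 : 4 * T ^ 2 <= T ^ 3) by (simpl; nra).
  assert (T4 : 4 * T ^ 3 <= T ^ 4) by (simpl; nra).
  unfold gm. apply F1. apply Nf_pos.
  - unfold Xf. assert (K < 4 * T ^ 3) by (unfold T in *; nra). lra.
  - unfold Nf, Xf, Yf.
    assert (C1 : - (T ^ 4) <= 4 * a1 * T ^ 3) by (replace (T ^ 4) with (T * T ^ 3) by ring; unfold T at 1; nra).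
    assert (C2 : - (T ^ 3) <= - 4 * ar * T ^ 2) by (replace (T ^ 3) with (T * T ^ 2) by ring; unfold T at 1; nra).
    assert (C3 : - (T ^ 2) <= 2 * a2 * T) by (replace (T ^ 2) with (T * T) by ring; unfold T at 1; nra).
    assert (C4 : - (T ^ 2) <= a1 * a2) by (assert (K * K <= T ^ 2) by (unfold T; nra); nra).
    assert (C5 : ar ^ 2 <= T ^ 2) by (assert (K * K <= T ^ 2) by (unfold T; nra); nra).
    assert (C6 : ai ^ 2 <= T ^ 2) by (assert (K * K <= T ^ 2) by (unfold T; nra); nra).
    assert (E : (a2 + 4 * T ^ 3 - 0) * (a1 + 2 * T - 0) - ((ar + 2 * T ^ 2) ^ 2 + ai ^ 2)
       = 4 * T ^ 4 + 4 * a1 * T ^ 3 - 4 * ar * T ^ 2 + 2 * a2 * T + a1 * a2 - ar ^ 2 - ai ^ 2) by ring.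
    lra.
Qed.

Lemma gm_le_gp t : gm t <= gp t.
Proof. apply mum_le_mup. Qed.

Lemma zero_gm : gm 0 < 0 -> exists t, 0 < t /\ gm t = 0.
Proof.
  intros H0. destruct big_T as (T & HT & HgT).
  destruct (IVT gm 0 T gm_cont HT H0 HgT) as (z & Hz & Hgz).
  exists z. split; auto. destruct (Req_dec z 0) as [->|]; [lra|]. lra.
Qed.

Lemma zero_gp : gp 0 < 0 -> exists t, 0 < t /\ gp t = 0.
Proof.
  intros H0. destruct big_T as (T & HT & HgT).
  assert (0 < gp T) by (pose proof (gm_le_gp T); lra).
  destruct (IVT gp 0 T gp_cont HT H0 H) as (z & Hz & Hgz).
  exists z. split; auto. destruct (Req_dec z 0) as [->|]; [lra|]. lra.
Qed.

Lemma gm_uniq s t : 0 <= s -> 0 <= t -> gm s = gm t -> s = t.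
Proof.
  intros Hs Ht He. destruct (Rtotal_order s t) as [H|[H|H]]; auto.
  - pose proof (gm_incr s t ltac:(lra)). lra.
  - pose proof (gm_incr t s ltac:(lra)). lra.
Qed.

Lemma gp_uniq s t : 0 <= s -> 0 <= t -> gp s = gp t -> s = t.
Proof.
  intros Hs Ht He. destruct (Rtotal_order s t) as [H|[H|H]]; auto.
  - pose proof (gp_incr s t ltac:(lra)). lra.
  - pose proof (gp_incr t s ltac:(lra)). lra.
Qed.

End Family.

Definition dq (t : R) : C := Cminus (qq t) (pp t).
Lemma dq_nz t : 0 < t -> dq t <> RtoC 0.
Proof. intros; apply Cnz; unfold dq, pp, qq; simpl; right; lra. Qed.

Definition g1H (t : R) : R -> C := fab t (Cmult (qq t) (Cinv (dq t))) (Cmult (Copp (pp t)) (Cinv (dq t))).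
Definition g2H (t : R) : R -> C := fab t (Cmult (Copp (RtoC 1)) (Cinv (dq t))) (Cinv (dq t)).

Definition m11H (al2 t : R) : C := RtoC (al2 + 4 * t ^ 3).
Definition m12H (al : C) (t : R) : C := Cplus (Cconj al) (RtoC (2 * t ^ 2)).
Definition m21H (al : C) (t : R) : C := Cplus al (RtoC (2 * t ^ 2)).
Definition m22H (al1 t : R) : C := RtoC (al1 + 2 * t).

Lemma rep_fab t a b x : 0 < t ->
  fab t a b x = Cplus (Cmult (Cplus a b) (g1H t x)) (Cmult (Cplus (Cmult a (pp t)) (Cmult b (qq t))) (g2H t x)).
Proof.
  intros Ht. unfold g1H, g2H, fab. pose proof (dq_nz t Ht) as Hd. unfold dq in *.
  field. auto.
Qed.

Lemma Hind_H t : 0 < t -> forall c1 c2,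
  (forall x, halfline x -> Cplus (Cmult c1 (g1H t x)) (Cmult c2 (g2H t x)) = RtoC 0) ->
  c1 = RtoC 0 /\ c2 = RtoC 0.
Proof.
  intros Ht c1 c2 H.
  assert (H0 := H 0 (Rle_refl 0)).
  unfold g1H, g2H in H0. rewrite !fab_0 in H0.
  assert (Hc1 : c1 = RtoC 0).
  { rewrite <- H0. pose proof (dq_nz t Ht) as Hd. unfold dq in *. field. auto. }
  subst c1. split; auto.
  set (x0 := PI / (2 * t)).
  assert (Hx0 : halfline x0) by (unfold halfline, x0; left; apply Rdiv_lt_0_compat; [apply PI_RGT_0|lra]).
  specialize (H x0 Hx0).
  assert (Hg : g2H t x0 <> RtoC 0).
  { unfold g2H, fab. pose proof (dq_nz t Ht) as Hd.
    intro Hz. apply Hd.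
    assert (Hdiff : Cminus (E (qq t) x0) (E (pp t) x0) = RtoC 0).
    { transitivity (Cmult (dq t) (Cplus (Cmult (Cmult (Copp (RtoC 1)) (Cinv (dq t))) (E (pp t) x0))
        (Cmult (Cinv (dq t)) (E (qq t) x0)))). field. auto. rewrite Hz. ring. }
    exfalso. unfold E, pp, qq in Hdiff. simpl in Hdiff.
    pose proof (f_equal snd Hdiff) as Hs. simpl in Hs.
    replace (t * x0) with (PI / 2) in Hs by (unfold x0; field; lra).
    replace (- t * x0) with (- (PI / 2)) in Hs by (unfold x0; field; lra).
    rewrite sin_neg, sin_PI2 in Hs. pose proof (exp_pos (- (PI / 2))). pose proof (exp_pos (PI / 2)). lra. }
  assert (Hm : Cmult c2 (g2H t x0) = RtoC 0) by (rewrite <- H; ring).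
  destruct (Cmult_eq0 _ _ Hm); auto. contradiction.
Qed.

Lemma I2 t a b : Cplus (Cmult a (Cpow (pp t) 2)) (Cmult b (Cpow (qq t) 2)) =
  Copp (Cplus (Cmult (RtoC (2 * t)) (Cplus (Cmult a (pp t)) (Cmult b (qq t)))) (Cmult (RtoC (2 * t ^ 2)) (Cplus a b))).
Proof. unfold pp, qq. apply injective_projections; simpl; ring. Qed.

Lemma I3 t a b : Cplus (Cmult a (Cpow (pp t) 3)) (Cmult b (Cpow (qq t) 3)) =
  Cplus (Cmult (RtoC (2 * t ^ 2)) (Cplus (Cmult a (pp t)) (Cmult b (qq t)))) (Cmult (RtoC (4 * t ^ 3)) (Cplus a b)).
Proof. unfold pp, qq. apply injective_projections; simpl; ring. Qed.

Lemma HE1_H al al1 al2 lam t : 0 < t -> lam = - (4 * t ^ 4) ->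
  forall u, H_eig al al1 al2 lam u -> exists w, Mker (m11H al2 t) (m12H al t) (m21H al t) (m22H al1 t) w /\
    forall x, halfline x -> u x = Cplus (Cmult (fst w) (g1H t x)) (Cmult (snd w) (g2H t x)).
Proof.
  intros Ht Hlam u Hu.
  destruct (H_rep al al1 al2 lam t u Ht Hlam Hu) as (a & b & Hr & B1 & B2).
  exists (Cplus a b, Cplus (Cmult a (pp t)) (Cmult b (qq t))). split.
  - unfold Mker; simpl. rewrite I2 in B1. rewrite I3 in B2.
    set (w0 := Cplus a b) in *. set (w1 := Cplus (Cmult a (pp t)) (Cmult b (qq t))) in *.
    clearbody w0 w1. split.
    + transitivity (Cplus (Cplus (Cmult (RtoC (2 * t ^ 2)) w1) (Cmult (RtoC (4 * t ^ 3)) w0))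
        (Cplus (Cmult (RtoC al2) w0) (Cmult (Cconj al) w1))).
      * unfold m11H, m12H. apply injective_projections; simpl; ring.
      * rewrite B2. ring.
    + transitivity (Cplus (Copp (Copp (Cplus (Cmult (RtoC (2 * t)) w1) (Cmult (RtoC (2 * t ^ 2)) w0))))
        (Cplus (Cmult al w0) (Cmult (RtoC al1) w1))).
      * unfold m21H, m22H. apply injective_projections; simpl; ring.
      * rewrite B1. ring.
  - intros x Hx. rewrite Hr by auto. simpl. apply rep_fab; auto.
Qed.

Lemma HE2_H al al1 al2 lam t : 0 < t -> lam = - (4 * t ^ 4) ->
  forall w, Mker (m11H al2 t) (m12H al t) (m21H al t) (m22H al1 t) w -> exists u, H_eig al al1 al2 lam u /\
    forall x, halfline x -> u x = Cplus (Cmult (fst w) (g1H t x)) (Cmult (snd w) (g2H t x)).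
Proof.
  intros Ht Hlam [w0 w1] [R1 R2]. simpl in R1, R2.
  pose proof (dq_nz t Ht) as Hd.
  set (a := Cmult (Cminus (Cmult w0 (qq t)) w1) (Cinv (dq t))).
  set (b := Cmult (Cminus w1 (Cmult w0 (pp t))) (Cinv (dq t))).
  assert (Hw0 : Cplus a b = w0) by (unfold a, b, dq in *; field; auto).
  assert (Hw1 : Cplus (Cmult a (pp t)) (Cmult b (qq t)) = w1) by (unfold a, b, dq in *; field; auto).
  exists (fab t a b). split.
  - apply H_con; auto.
    + rewrite I2, Hw0, Hw1.
      transitivity (Cplus (Cplus (Cmult (m21H al t) w0) (Cmult (m22H al1 t) w1))
        (Copp (Cplus (Cmult (RtoC (2 * t)) w1) (Cmult (RtoC (2 * t ^ 2)) w0)))).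
      * rewrite R2. ring.
      * unfold m21H, m22H. apply injective_projections; simpl; ring.
    + rewrite I3, Hw0, Hw1.
      transitivity (Cplus (Copp (Cplus (Cmult (m11H al2 t) w0) (Cmult (m12H al t) w1)))
        (Cplus (Cmult (RtoC (2 * t ^ 2)) w1) (Cmult (RtoC (4 * t ^ 3)) w0))).
      * rewrite R1. ring.
      * unfold m11H, m12H. apply injective_projections; simpl; ring.
  - intros x Hx. simpl. rewrite rep_fab by auto. rewrite Hw0, Hw1. reflexivity.
Qed.

Definition tl (lam : R) : R := sqrt (sqrt (- lam / 4)).

Lemma tl_pos lam : lam < 0 -> 0 < tl lam.
Proof. intros H. unfold tl. apply sqrt_lt_R0. apply sqrt_lt_R0. lra. Qed.

Lemma tl_eq lam : lam < 0 -> lam = - (4 * tl lam ^ 4).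
Proof.
  intros H. unfold tl.
  replace (sqrt (sqrt (- lam / 4)) ^ 4) with ((sqrt (sqrt (- lam / 4)) ^ 2) ^ 2) by ring.
  rewrite pow2_sqrt by (apply sqrt_pos). rewrite pow2_sqrt by lra. field.
Qed.

Lemma tl_inv s : 0 < s -> tl (- (4 * s ^ 4)) = s.
Proof.
  intros Hs. unfold tl.
  replace (- - (4 * s ^ 4) / 4) with ((s ^ 2) ^ 2) by field.
  rewrite sqrt_pow2 by (apply pow2_ge_0). rewrite sqrt_pow2 by lra. auto.
Qed.

Lemma detH al al1 al2 t :
  Cdet (m11H al2 t) (m12H al t) (m21H al t) (m22H al1 t) =
  RtoC (Xf al2 t * Yf al1 t - Nf (fst al) (snd al) t).
Proof. unfold Cdet, m11H, m12H, m21H, m22H, Xf, Yf, Nf. destruct al. apply injective_projections; simpl; ring. Qed.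

Lemma RtoC_inj (x y : R) : RtoC x = RtoC y -> x = y.
Proof. intros H. exact (f_equal fst H). Qed.

Lemma mzeroH al al1 al2 t :
  Mzero (m11H al2 t) (m12H al t) (m21H al t) (m22H al1 t) <->
  (gm al1 al2 (fst al) (snd al) t = 0 /\ gp al1 al2 (fst al) (snd al) t = 0).
Proof.
  unfold Mzero, m11H, m12H, m21H, m22H, gm, gp. split.
  - intros (H1 & H2 & H3 & H4).
    apply RtoC_inj in H1. apply RtoC_inj in H4.
    pose proof (f_equal fst H3) as H5. pose proof (f_equal snd H3) as H6. simpl in H5, H6.
    assert (HX : Xf al2 t = 0) by (unfold Xf; lra).
    assert (HY : Yf al1 t = 0) by (unfold Yf; lra).
    assert (H7 : snd al = 0) by lra. assert (H8 : fst al + 2 * t ^ 2 = 0) by lra.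
    assert (HN : Nf (fst al) (snd al) t = 0) by (unfold Nf; rewrite H7, H8; ring).
    rewrite HX, HY, HN. unfold mum, mup.
    replace ((0 - 0) ^ 2 + 4 * 0) with 0 by ring. rewrite sqrt_0. split; lra.
  - intros [H1 H2]. destruct (both_zero _ _ _ (Nf_pos (fst al) (snd al) t) H1 H2) as (HX & HY & HN).
    unfold Xf, Yf, Nf in *.
    assert (Ha : fst al + 2 * t ^ 2 = 0 /\ snd al = 0).
    { pose proof (pow2_ge_0 (fst al + 2 * t ^ 2)). pose proof (pow2_ge_0 (snd al)).
      split; apply Rsqr_0_uniq; unfold Rsqr; nra. }
    destruct Ha as [Ha1 Ha2]. destruct al as [ar ai]. simpl in *.
    repeat split; apply injective_projections; simpl; lra.
Qed.

Section HSide.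
Variables (al : C) (al1 al2 : R).

Lemma H_nz lam : lam < 0 ->
  ((exists v, H_eig al al1 al2 lam v /\ exists x, halfline x /\ v x <> RtoC 0) <->
   (gm al1 al2 (fst al) (snd al) (tl lam) = 0 \/ gp al1 al2 (fst al) (snd al) (tl lam) = 0)).
Proof.
  intros Hl. pose proof (tl_pos lam Hl) as Ht. pose proof (tl_eq lam Hl) as He.
  rewrite (nz_iff R halfline (H_eig al al1 al2 lam) (g1H (tl lam)) (g2H (tl lam))
     (m11H al2 (tl lam)) (m12H al (tl lam)) (m21H al (tl lam)) (m22H al1 (tl lam))
     (Hind_H _ Ht) (HE1_H al al1 al2 lam _ Ht He) (HE2_H al al1 al2 lam _ Ht He)).
  rewrite detH. unfold gm, gp. rewrite <- prod_zero by apply Nf_pos.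
  split; intros H.
  - apply RtoC_inj in H. exact H.
  - rewrite H. reflexivity.
Qed.

Lemma H_dim1 lam : lam < 0 ->
  (gm al1 al2 (fst al) (snd al) (tl lam) = 0 \/ gp al1 al2 (fst al) (snd al) (tl lam) = 0) ->
  ~ (gm al1 al2 (fst al) (snd al) (tl lam) = 0 /\ gp al1 al2 (fst al) (snd al) (tl lam) = 0) ->
  subspace_dim halfline (H_eig al al1 al2 lam) 1.
Proof.
  intros Hl Hz Hnz. pose proof (tl_pos lam Hl) as Ht. pose proof (tl_eq lam Hl) as He.
  apply (dim1 R halfline (H_eig al al1 al2 lam) (g1H (tl lam)) (g2H (tl lam))
     (m11H al2 (tl lam)) (m12H al (tl lam)) (m21H al (tl lam)) (m22H al1 (tl lam))
     (Hind_H _ Ht) (HE1_H al al1 al2 lam _ Ht He) (HE2_H al al1 al2 lam _ Ht He)).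
  - rewrite detH. unfold gm, gp in Hz. rewrite <- prod_zero in Hz by apply Nf_pos. rewrite Hz. reflexivity.
  - rewrite mzeroH. exact Hnz.
Qed.

Lemma H_dim2 lam : lam < 0 ->
  gm al1 al2 (fst al) (snd al) (tl lam) = 0 -> gp al1 al2 (fst al) (snd al) (tl lam) = 0 ->
  subspace_dim halfline (H_eig al al1 al2 lam) 2.
Proof.
  intros Hl H1 H2. pose proof (tl_pos lam Hl) as Ht. pose proof (tl_eq lam Hl) as He.
  apply (dim2 R halfline (H_eig al al1 al2 lam) (g1H (tl lam)) (g2H (tl lam))
     (m11H al2 (tl lam)) (m12H al (tl lam)) (m21H al (tl lam)) (m22H al1 (tl lam))
     (Hind_H _ Ht) (HE1_H al al1 al2 lam _ Ht He) (HE2_H al al1 al2 lam _ Ht He)).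
  rewrite mzeroH. auto.
Qed.

End HSide.

Definition g1A (b : bool) : C := if b then RtoC 1 else RtoC 0.
Definition g2A (b : bool) : C := if b then RtoC 0 else RtoC 1.

Section ASide.
Variables (al : C) (al1 al2 : R).

Definition m11A lam := RtoC (al2 - lam).
Definition m22A lam := RtoC (al1 - lam).

Lemma Hind_A : forall c1 c2,
  (forall x, allbool x -> Cplus (Cmult c1 (g1A x)) (Cmult c2 (g2A x)) = RtoC 0) ->
  c1 = RtoC 0 /\ c2 = RtoC 0.
Proof.
  intros c1 c2 H. pose proof (H true I) as H1. pose proof (H false I) as H2. simpl in H1, H2.
  split.
  - rewrite <- H1. ring.
  - rewrite <- H2. ring.
Qed.

Lemma HE1_A lam : forall u, A_eig al al1 al2 lam u -> exists w, Mker (m11A lam) (Cconj al) al (m22A lam) w /\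
    forall x, allbool x -> u x = Cplus (Cmult (fst w) (g1A x)) (Cmult (snd w) (g2A x)).
Proof.
  intros u [E1 E2]. exists (u true, u false). split.
  - unfold Mker, m11A, m22A; simpl. split.
    + transitivity (Cminus (Cplus (Cmult (RtoC al2) (u true)) (Cmult (Cconj al) (u false))) (Cmult (RtoC lam) (u true))).
      * apply injective_projections; simpl; ring.
      * rewrite E1. ring.
    + transitivity (Cminus (Cplus (Cmult al (u true)) (Cmult (RtoC al1) (u false))) (Cmult (RtoC lam) (u false))).
      * apply injective_projections; simpl; ring.
      * rewrite E2. ring.
  - intros [|] _; simpl; ring.
Qed.

Lemma HE2_A lam : forall w, Mker (m11A lam) (Cconj al) al (m22A lam) w -> exists u, A_eig al al1 al2 lam u /\
    forall x, allbool x -> u x = Cplus (Cmult (fst w) (g1A x)) (Cmult (snd w) (g2A x)).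
Proof.
  intros [w0 w1] [R1 R2]. unfold m11A, m22A in *; simpl in R1, R2.
  exists (fun b : bool => if b then w0 else w1). split.
  - split.
    + transitivity (Cplus (Cplus (Cmult (RtoC (al2 - lam)) w0) (Cmult (Cconj al) w1)) (Cmult (RtoC lam) w0)).
      * apply injective_projections; simpl; ring.
      * rewrite R1. ring.
    + transitivity (Cplus (Cplus (Cmult al w0) (Cmult (RtoC (al1 - lam)) w1)) (Cmult (RtoC lam) w1)).
      * apply injective_projections; simpl; ring.
      * rewrite R2. ring.
  - intros [|] _; simpl; ring.
Qed.

Notation gm0 := (gm al1 al2 (fst al) (snd al) 0).
Notation gp0 := (gp al1 al2 (fst al) (snd al) 0).

Lemma detA lam : Cdet (m11A lam) (Cconj al) al (m22A lam) = RtoC ((gm0 - lam) * (gp0 - lam)).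
Proof.
  assert (E : (gm0 - lam) * (gp0 - lam) = (al2 - lam) * (al1 - lam) - ((fst al) ^ 2 + (snd al) ^ 2)).
  { transitivity (gm0 * gp0 - lam * (gm0 + gp0) + lam ^ 2). ring.
    unfold gm, gp. rewrite mu_sum, mu_prod by apply Nf_pos. unfold Xf, Yf, Nf. ring. }
  rewrite E. unfold Cdet, m11A, m22A. destruct al. apply injective_projections; simpl; ring.
Qed.

Lemma mzeroA lam : Mzero (m11A lam) (Cconj al) al (m22A lam) <-> (gm0 = lam /\ gp0 = lam).
Proof.
  unfold Mzero, m11A, m22A. split.
  - intros (H1 & H2 & H3 & H4). apply RtoC_inj in H1. apply RtoC_inj in H4.
    assert (HX : Xf al2 0 = lam) by (unfold Xf; lra).
    assert (HY : Yf al1 0 = lam) by (unfold Yf; lra).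
    assert (HN : Nf (fst al) (snd al) 0 = 0) by (unfold Nf; rewrite H3; simpl; ring).
    unfold gm, gp. rewrite HX, HY, HN. unfold mum, mup.
    replace ((lam - lam) ^ 2 + 4 * 0) with 0 by ring. rewrite sqrt_0. split; lra.
  - intros [H1 H2].
    destruct (mum_facts (Xf al2 0) (Yf al1 0) (Nf (fst al) (snd al) 0) (Nf_pos _ _ _)) as (A1 & A2 & A3).
    destruct (mup_facts (Xf al2 0) (Yf al1 0) (Nf (fst al) (snd al) 0) (Nf_pos _ _ _)) as (B1 & B2 & B3).
    unfold gm, gp in H1, H2. rewrite H1 in A1, A2, A3. rewrite H2 in B1, B2, B3.
    assert (HX : Xf al2 0 = lam) by lra. assert (HY : Yf al1 0 = lam) by lra.
    rewrite HX, HY in A3. replace ((lam - lam) * (lam - lam)) with 0 in A3 by ring.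
    unfold Xf, Yf, Nf in *.
    assert (Ha : fst al = 0 /\ snd al = 0).
    { replace (fst al + 2 * 0 ^ 2) with (fst al) in A3 by ring.
      pose proof (pow2_ge_0 (fst al)). pose proof (pow2_ge_0 (snd al)).
      split; apply Rsqr_0_uniq; unfold Rsqr; nra. }
    destruct Ha as [Ha1 Ha2]. destruct al as [ar ai]. simpl in *. subst.
    repeat split; apply injective_projections; simpl; lra.
Qed.

Lemma A_nz lam :
  ((exists v, A_eig al al1 al2 lam v /\ exists x, allbool x /\ v x <> RtoC 0) <-> (lam = gm0 \/ lam = gp0)).
Proof.
  rewrite (nz_iff bool allbool (A_eig al al1 al2 lam) g1A g2A (m11A lam) (Cconj al) al (m22A lam)
     Hind_A (HE1_A lam) (HE2_A lam)).
  rewrite detA. split; intros H.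
  - apply RtoC_inj in H. apply Rmult_integral in H. lra.
  - destruct H as [->| ->]; f_equal; ring.
Qed.

Lemma A_dim1 lam : (lam = gm0 \/ lam = gp0) -> gm0 <> gp0 -> subspace_dim allbool (A_eig al al1 al2 lam) 1.
Proof.
  intros Hz Hne.
  apply (dim1 bool allbool (A_eig al al1 al2 lam) g1A g2A (m11A lam) (Cconj al) al (m22A lam)
     Hind_A (HE1_A lam) (HE2_A lam)).
  - rewrite detA. destruct Hz as [->| ->]; f_equal; ring.
  - rewrite mzeroA. intros [H1 H2]. apply Hne. congruence.
Qed.

Lemma A_dim2 lam : gm0 = lam -> gp0 = lam -> subspace_dim allbool (A_eig al al1 al2 lam) 2.
Proof.
  intros H1 H2.
  apply (dim2 bool allbool (A_eig al al1 al2 lam) g1A g2A (m11A lam) (Cconj al) al (m22A lam)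
     Hind_A (HE1_A lam) (HE2_A lam)).
  rewrite mzeroA. auto.
Qed.

End ASide.

Section Final.
Variables (al : C) (al1 al2 : R).
Notation G := (gm al1 al2 (fst al) (snd al)).
Notation P := (gp al1 al2 (fst al) (snd al)).

Definition nA : nat := if Rlt_dec (G 0) 0 then (if Rlt_dec (P 0) 0 then 2%nat else 1%nat) else 0%nat.

Lemma neg4 s : 0 < s -> - (4 * s ^ 4) < 0.
Proof. intros. assert (0 < s ^ 4) by (apply pow_lt; auto). lra. Qed.

Lemma G_pos_shift t : 0 < t -> G 0 < G t.
Proof. intros; apply gm_incr; lra. Qed.
Lemma P_pos_shift t : 0 < t -> P 0 < P t.
Proof. intros; apply gp_incr; lra. Qed.

Lemma zeroG_iff tm lam : 0 < tm -> G tm = 0 -> lam < 0 -> (G (tl lam) = 0 <-> lam = - (4 * tm ^ 4)).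
Proof.
  intros Htm Hz Hl. split.
  - intros H. assert (tl lam = tm).
    { apply (gm_uniq al1 al2 (fst al) (snd al)). left; apply tl_pos; auto. lra. congruence. }
    rewrite (tl_eq lam Hl). rewrite H0. auto.
  - intros ->. rewrite tl_inv; auto.
Qed.

Lemma zeroP_iff tp lam : 0 < tp -> P tp = 0 -> lam < 0 -> (P (tl lam) = 0 <-> lam = - (4 * tp ^ 4)).
Proof.
  intros Htm Hz Hl. split.
  - intros H. assert (tl lam = tp).
    { apply (gp_uniq al1 al2 (fst al) (snd al)). left; apply tl_pos; auto. lra. congruence. }
    rewrite (tl_eq lam Hl). rewrite H0. auto.
  - intros ->. rewrite tl_inv; auto.
Qed.

Lemma A_count : neg_eig_count allbool (A_eig al al1 al2) nA.
Proof.
  pose proof (gm_le_gp al1 al2 (fst al) (snd al) 0) as Hle.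
  unfold nA. destruct (Rlt_dec (G 0) 0) as [Hm|Hm]; [destruct (Rlt_dec (P 0) 0) as [Hp|Hp]|].
  - destruct (Req_dec (G 0) (P 0)) as [Heq|Hne].
    + exists (G 0 :: nil), (2%nat :: nil). split; [repeat constructor; simpl; tauto|].
      split; [reflexivity|]. split.
      * intros lam. rewrite A_nz. simpl. split.
        -- intros [_ [H|H]]; left; congruence.
        -- intros [H|[]]. subst. split; auto.
      * split; [|reflexivity]. intros i Hi. simpl in Hi. destruct i; [|lia]. cbn [nth].
        apply A_dim2; congruence.
    + exists (G 0 :: P 0 :: nil), (1%nat :: 1%nat :: nil).
      split; [repeat constructor; simpl; try tauto; intros [H|[]]; congruence|].
      split; [reflexivity|]. split.
      * intros lam. rewrite A_nz. simpl. split.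
        -- intros [_ [H|H]]; subst; auto.
        -- intros [H|[H|[]]]; subst; auto.
      * split; [|reflexivity]. intros i Hi. simpl in Hi.
        destruct i as [|[|i]]; [| |lia]; cbn [nth]; apply A_dim1; auto.
  - exists (G 0 :: nil), (1%nat :: nil). split; [repeat constructor; simpl; tauto|].
    split; [reflexivity|]. split.
    * intros lam. rewrite A_nz. simpl. split.
      -- intros [Hl [H|H]]; [left; auto|subst; lra].
      -- intros [H|[]]. subst. split; auto.
    * split; [|reflexivity]. intros i Hi. simpl in Hi. destruct i; [|lia]. cbn [nth].
      apply A_dim1; auto. lra.
  - exists nil, nil. split; [constructor|]. split; [reflexivity|]. split.
    * intros lam. rewrite A_nz. simpl. split; [|tauto]. intros [Hl [H|H]]; subst; lra.
    * split; [|reflexivity]. intros i Hi. simpl in Hi. lia.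
Qed.

Lemma H_count : neg_eig_count halfline (H_eig al al1 al2) nA.
Proof.
  pose proof (gm_le_gp al1 al2 (fst al) (snd al) 0) as Hle.
  unfold nA. destruct (Rlt_dec (G 0) 0) as [Hm|Hm]; [destruct (Rlt_dec (P 0) 0) as [Hp|Hp]|].
  - destruct (zero_gm al1 al2 (fst al) (snd al) Hm) as (tm & Htm & Hzm).
    destruct (zero_gp al1 al2 (fst al) (snd al) Hp) as (tp & Htp & Hzp).
    destruct (Req_dec tm tp) as [Heq|Hne].
    + subst tp. exists (- (4 * tm ^ 4) :: nil), (2%nat :: nil).
      split; [repeat constructor; simpl; tauto|]. split; [reflexivity|]. split.
      * intros lam. simpl. split.
        -- intros [Hl Hex]. rewrite (H_nz al al1 al2 lam Hl) in Hex. left.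
           destruct Hex as [H|H]; [apply (zeroG_iff tm) in H|apply (zeroP_iff tm) in H]; auto.
        -- intros [H|[]]. subst lam. pose proof (neg4 tm Htm). split; auto.
           rewrite (H_nz al al1 al2 _ H). left. apply (zeroG_iff tm); auto.
      * split; [|reflexivity]. intros i Hi. simpl in Hi. destruct i; [|lia]. cbn [nth].
        pose proof (neg4 tm Htm). apply H_dim2; auto; try rewrite tl_inv; auto.
    + assert (Hne' : - (4 * tm ^ 4) <> - (4 * tp ^ 4)).
      { intro He. apply Hne. rewrite <- (tl_inv tm Htm), <- (tl_inv tp Htp). congruence. }
      assert (Hpm : P tm <> 0).
      { intro H. apply Hne. apply (gp_uniq al1 al2 (fst al) (snd al)); lra. }
      assert (Hmp : G tp <> 0).
      { intro H. apply Hne. apply (gm_uniq al1 al2 (fst al) (snd al)); lra. }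
      exists (- (4 * tm ^ 4) :: - (4 * tp ^ 4) :: nil), (1%nat :: 1%nat :: nil).
      split; [constructor; [simpl; intros [H|[]]; apply Hne'; first [exact H | symmetry; exact H]| constructor; [simpl; tauto| constructor]]|].
      split; [reflexivity|]. split.
      * intros lam. simpl. split.
        -- intros [Hl Hex]. rewrite (H_nz al al1 al2 lam Hl) in Hex.
           destruct Hex as [H|H]; [left; apply (zeroG_iff tm) in H|right; left; apply (zeroP_iff tp) in H]; auto.
        -- intros [H|[H|[]]]; subst lam.
           ++ pose proof (neg4 tm Htm). split; auto.
              rewrite (H_nz al al1 al2 _ H). left. apply (zeroG_iff tm); auto.
           ++ pose proof (neg4 tp Htp). split; auto.
              rewrite (H_nz al al1 al2 _ H). right. apply (zeroP_iff tp); auto.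
      * split; [|reflexivity]. intros i Hi. simpl in Hi.
        destruct i as [|[|i]]; [| |lia]; cbn [nth].
        -- pose proof (neg4 tm Htm). apply H_dim1; auto; try rewrite tl_inv; auto. tauto.
        -- pose proof (neg4 tp Htp). apply H_dim1; auto; try rewrite tl_inv; auto. tauto.
  - destruct (zero_gm al1 al2 (fst al) (snd al) Hm) as (tm & Htm & Hzm).
    assert (Hpm : P tm <> 0) by (pose proof (P_pos_shift tm Htm); lra).
    exists (- (4 * tm ^ 4) :: nil), (1%nat :: nil).
    split; [repeat constructor; simpl; tauto|]. split; [reflexivity|]. split.
    * intros lam. simpl. split.
      -- intros [Hl Hex]. rewrite (H_nz al al1 al2 lam Hl) in Hex. left.
         destruct Hex as [H|H]; [apply (zeroG_iff tm) in H; auto|].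
         exfalso. pose proof (P_pos_shift (tl lam) (tl_pos lam Hl)). lra.
      -- intros [H|[]]. subst lam. pose proof (neg4 tm Htm). split; auto.
         rewrite (H_nz al al1 al2 _ H). left. apply (zeroG_iff tm); auto.
    * split; [|reflexivity]. intros i Hi. simpl in Hi. destruct i; [|lia]. cbn [nth].
      pose proof (neg4 tm Htm). apply H_dim1; auto; try rewrite tl_inv; auto. tauto.
  - exists nil, nil. split; [constructor|]. split; [reflexivity|]. split.
    * intros lam. simpl. split; [|tauto]. intros [Hl Hex].
      rewrite (H_nz al al1 al2 lam Hl) in Hex.
      pose proof (G_pos_shift (tl lam) (tl_pos lam Hl)).
      pose proof (gm_le_gp al1 al2 (fst al) (snd al) (tl lam)). lra.
    * split; [|reflexivity]. intros i Hi. simpl in Hi. lia.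
Qed.

End Final.

Theorem proposition5p4 (al : C) (al1 al2 : R) :
  forall n : nat,
    neg_eig_count halfline (H_eig al al1 al2) n <->
    neg_eig_count allbool (A_eig al al1 al2) n.
Proof.
  intros n. split; intros H.
  - rewrite (neg_unique _ _ _ _ H (H_count al al1 al2)). apply A_count.
  - rewrite (neg_unique _ _ _ _ H (A_count al al1 al2)). apply H_count.
Qed.
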